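(* For real $\alpha,\beta$, the inequalities $M_{\alpha }\left( 1,\cos x;\tfrac{2}{3}\right) <\frac{\sin x}{x}<M_{\beta}\left( 1,\cos x;\tfrac{2}{3}\right)$ hold for all $x\in(0,\pi/2)$ if and only if $\alpha \leq 4/5$ and $\beta \geq \frac{\ln 3-\ln 2}{\ln \pi -\ln 2}$.
   Context: For $a,b>0$ and $w\in(0,1)$, the weighted power mean is $M_{r}(a,b;w)=\left( wa^{r}+(1-w) b^{r}\right)^{1/r}$ if $r\neq 0$ and $M_{0}(a,b;w)=a^{w}b^{1-w}$. *)

(* Defs.v *)
From Stdlib Require Import Reals.
Open Scope R_scope.

(* Weighted power mean M_r(a,b;w) for a,b>0, w in (0,1):
   (w a^r + (1-w) b^r)^(1/r) if r <> 0, and a^w b^(1-w) if r = 0.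
   Real powers via Rpower (= exp (y * ln x)), valid for positive bases. *)
Definition power_mean (r a b w : R) : R :=
  if Req_EM_T r 0 then Rpower a w * Rpower b (1 - w)
  else Rpower (w * Rpower a r + (1 - w) * Rpower b r) (1 / r).

(* Main.v *)
Require Import Defs.
From Stdlib Require Import Reals QArith Qreals Lra Qround ZArith List Lia.
Open Scope R_scope.

Module MachM.
Open Scope R_scope.

Fixpoint peval (l : list R) (t : R) : R :=
  match l with nil => 0 | c :: l' => c + t * peval l' t end.

Lemma peval_app l1 l2 t : peval (l1 ++ l2) t = peval l1 t + t ^ (length l1) * peval l2 t.
Proof. induction l1 as [|a l1 IH]; simpl; [ring| rewrite IH; ring]. Qed.

Fixpoint paddR (p q : list R) : list R :=
  match p, q with nil, q => q | p, nil => p | a :: p', b :: q' => (a + b) :: paddR p' q' end.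
Lemma peval_paddR p q t : peval (paddR p q) t = peval p t + peval q t.
Proof. revert q; induction p as [|a p IH]; intros [|b q]; simpl; try ring. rewrite IH; ring. Qed.

Fixpoint pmulR (p q : list R) : list R :=
  match p with nil => nil | a :: p' => paddR (map (Rmult a) q) (0 :: pmulR p' q) end.
Lemma peval_map_mult a q t : peval (map (Rmult a) q) t = a * peval q t.
Proof. induction q as [|b q IH]; simpl; [ring| rewrite IH; ring]. Qed.
Lemma peval_pmulR p q t : peval (pmulR p q) t = peval p t * peval q t.
Proof. induction p as [|a p IH]; simpl; [ring|]. rewrite peval_paddR, peval_map_mult; simpl. rewrite IH; ring. Qed.

Definition I := (Q * Q)%type.
Definition inI (c : R) (i : I) := Q2R (fst i) <= c <= Q2R (snd i).

Definition prec : positive := 1152921504606846976%positive.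
Definition rdn (q : Q) : Q := Qmake (Qfloor (q * (Zpos prec # 1))) prec.
Definition rup (q : Q) : Q := Qmake (Qceiling (q * (Zpos prec # 1))) prec.

Lemma Q2R_make z p : Q2R (Qmake z p) = IZR z / IZR (Zpos p).
Proof. reflexivity. Qed.

Lemma rdn_le q : Q2R (rdn q) <= Q2R q.
Proof.
  unfold rdn. rewrite Q2R_make.
  pose proof (Qle_Rle _ _ (Qfloor_le (q * (Z.pos prec # 1)))) as H.
  rewrite Q2R_mult in H. unfold inject_Z in H. rewrite !Q2R_make in H.
  assert (0 < IZR (Z.pos prec)) by (apply IZR_lt; reflexivity).
  apply (Rmult_le_reg_r (IZR (Z.pos prec))); auto.
  unfold Rdiv; rewrite Rmult_assoc, Rinv_l by lra. 
  replace (IZR 1) with 1 in H by reflexivity. lra.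
Qed.
Lemma rup_ge q : Q2R q <= Q2R (rup q).
Proof.
  unfold rup. rewrite Q2R_make.
  pose proof (Qle_Rle _ _ (Qle_ceiling (q * (Z.pos prec # 1)))) as H.
  rewrite Q2R_mult in H. unfold inject_Z in H. rewrite !Q2R_make in H.
  assert (0 < IZR (Z.pos prec)) by (apply IZR_lt; reflexivity).
  apply (Rmult_le_reg_r (IZR (Z.pos prec))); auto.
  unfold Rdiv; rewrite Rmult_assoc, Rinv_l by lra.
  replace (IZR 1) with 1 in H by reflexivity. lra.
Qed.

Definition mkI (lo hi : Q) : I :=
  if Qeq_bool lo hi then (Qred lo, Qred lo) else (rdn lo, rup hi).

Lemma mkI_ok c lo hi : Q2R lo <= c <= Q2R hi -> inI c (mkI lo hi).
Proof.
  intros [H1 H2]. unfold mkI, inI.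
  destruct (Qeq_bool lo hi) eqn:E; simpl.
  - apply Qeq_bool_iff in E. apply Qeq_eqR in E.
    rewrite !(Qeq_eqR _ _ (Qred_correct lo)). lra.
  - pose proof (rdn_le lo); pose proof (rup_ge hi); lra.
Qed.

Definition qmin (a b : Q) := if Qle_bool a b then a else b.
Definition qmax (a b : Q) := if Qle_bool a b then b else a.
Lemma qmin_R a b : Q2R (qmin a b) = Rmin (Q2R a) (Q2R b).
Proof. unfold qmin. destruct (Qle_bool a b) eqn:E.
 - apply Qle_bool_iff, Qle_Rle in E. rewrite Rmin_left; auto.
 - rewrite Rmin_right; auto. assert (~ (a <= b)%Q) by (intro H; apply Qle_bool_iff in H; congruence).
   apply Qnot_le_lt, Qlt_Rlt in H. lra. Qed.
Lemma qmax_R a b : Q2R (qmax a b) = Rmax (Q2R a) (Q2R b).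
Proof. unfold qmax. destruct (Qle_bool a b) eqn:E.
 - apply Qle_bool_iff, Qle_Rle in E. rewrite Rmax_right; auto.
 - rewrite Rmax_left; auto. assert (~ (a <= b)%Q) by (intro H; apply Qle_bool_iff in H; congruence).
   apply Qnot_le_lt, Qlt_Rlt in H. lra. Qed.

Definition iadd (i j : I) : I := mkI (fst i + fst j) (snd i + snd j).
Definition ineg (i : I) : I := (- snd i, - fst i)%Q.
Definition imul (i j : I) : I :=
  let '(a, b) := i in let '(c, d) := j in
  let p1 := (a * c)%Q in let p2 := (a * d)%Q in let p3 := (b * c)%Q in let p4 := (b * d)%Q in
  mkI (qmin (qmin p1 p2) (qmin p3 p4)) (qmax (qmax p1 p2) (qmax p3 p4)).

Lemma iadd_ok x y i j : inI x i -> inI y j -> inI (x + y) (iadd i j).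
Proof. unfold inI, iadd; intros; apply mkI_ok; rewrite !Q2R_plus; lra. Qed.
Lemma ineg_ok x i : inI x i -> inI (- x) (ineg i).
Proof. unfold inI, ineg; simpl; rewrite !Q2R_opp; lra. Qed.

Lemma lin1 x y a b : a <= x <= b -> Rmin (a*y) (b*y) <= x*y <= Rmax (a*y) (b*y).
Proof.
  intros H. destruct (Rle_dec 0 y).
  - assert (a*y <= x*y) by nra. assert (x*y <= b*y) by nra.
    split; [apply Rle_trans with (a*y); [apply Rmin_l|auto] | apply Rle_trans with (b*y); [auto|apply Rmax_r]].
  - assert (b*y <= x*y) by nra. assert (x*y <= a*y) by nra.
    split; [apply Rle_trans with (b*y); [apply Rmin_r|auto] | apply Rle_trans with (a*y); [auto|apply Rmax_l]].
Qed.

Lemma imul_ok x y i j : inI x i -> inI y j -> inI (x * y) (imul i j).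
Proof.
  destruct i as [a b], j as [c d]; unfold inI, imul; simpl; intros Hx Hy.
  apply mkI_ok. rewrite !qmin_R, !qmax_R, !Q2R_mult.
  pose proof (lin1 _ y _ _ Hx) as [H1 H2].
  pose proof (lin1 _ (Q2R a) _ _ Hy) as [H3 H4].
  pose proof (lin1 _ (Q2R b) _ _ Hy) as [H5 H6].
  rewrite (Rmult_comm (Q2R c) (Q2R a)), (Rmult_comm (Q2R d) (Q2R a)), (Rmult_comm y (Q2R a)) in H3, H4.
  rewrite (Rmult_comm (Q2R c) (Q2R b)), (Rmult_comm (Q2R d) (Q2R b)), (Rmult_comm y (Q2R b)) in H5, H6.
  split.
  - apply Rle_trans with (Rmin (Q2R a * y) (Q2R b * y)); [|exact H1].
    apply Rmin_glb; [apply Rle_trans with (Rmin (Q2R a * Q2R c) (Q2R a * Q2R d)); [apply Rmin_l|auto]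
                    |apply Rle_trans with (Rmin (Q2R b * Q2R c) (Q2R b * Q2R d)); [apply Rmin_r|auto]].
  - apply Rle_trans with (Rmax (Q2R a * y) (Q2R b * y)); [exact H2|].
    apply Rmax_lub; [apply Rle_trans with (Rmax (Q2R a * Q2R c) (Q2R a * Q2R d)); [auto|apply Rmax_l]
                    |apply Rle_trans with (Rmax (Q2R b * Q2R c) (Q2R b * Q2R d)); [auto|apply Rmax_r]].
Qed.

Definition enc (p : list I) (t v : R) := exists cs, Forall2 inI cs p /\ v = peval cs t.

Fixpoint padd (p q : list I) : list I :=
  match p, q with nil, q => q | p, nil => p | a :: p', b :: q' => iadd a b :: padd p' q' end.
Definition pneg (p : list I) := map ineg p.
Definition pscale (a : I) (q : list I) := map (imul a) q.
Fixpoint pmul (p q : list I) : list I :=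
  match p with nil => nil | a :: p' => padd (pscale a q) ((0,0)%Q :: pmul p' q) end.
Fixpoint ihorner (h : Q) (l : list I) : I :=
  match l with nil => (0,0)%Q | a :: l' => iadd a (imul (0,h)%Q (ihorner h l')) end.
Definition trunc (d : nat) (h : Q) (p : list I) := firstn d p ++ (ihorner h (skipn d p) :: nil).

Lemma padd_ok cs ds p q : Forall2 inI cs p -> Forall2 inI ds q -> Forall2 inI (paddR cs ds) (padd p q).
Proof.
  intros H; revert ds q; induction H as [|c a cs p Hca Hcs IH]; intros ds q Hd; simpl; auto.
  destruct Hd as [|d b ds q Hdb Hds]; simpl; constructor; auto. apply iadd_ok; auto.
Qed.
Lemma pneg_ok cs p : Forall2 inI cs p -> Forall2 inI (map Ropp cs) (pneg p).
Proof. induction 1; simpl; constructor; auto. apply ineg_ok; auto. Qed.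
Lemma peval_neg cs t : peval (map Ropp cs) t = - peval cs t.
Proof. induction cs; simpl; [ring| rewrite IHcs; ring]. Qed.
Lemma pscale_ok c a ds q : inI c a -> Forall2 inI ds q -> Forall2 inI (map (Rmult c) ds) (pscale a q).
Proof. intros Hc; induction 1; simpl; constructor; auto. apply imul_ok; auto. Qed.
Lemma inI0 : inI 0 (0,0)%Q.
Proof. unfold inI; simpl. unfold Q2R; simpl. lra. Qed.
Lemma pmul_ok cs ds p q : Forall2 inI cs p -> Forall2 inI ds q -> Forall2 inI (pmulR cs ds) (pmul p q).
Proof.
  induction 1 as [|c a cs p Hca Hcs IH]; intros Hd; simpl; [constructor|].
  apply padd_ok; [apply pscale_ok; auto|]. constructor; [apply inI0| auto].
Qed.
Lemma ihorner_ok h cs l t : Forall2 inI cs l -> 0 <= t <= Q2R h -> inI (peval cs t) (ihorner h l).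
Proof.
  intros H Ht; induction H; cbn [peval ihorner]; [apply inI0|].
  apply iadd_ok; auto. apply (imul_ok t _ (0,h)%Q); auto. unfold inI; simpl. unfold Q2R at 1; simpl. lra.
Qed.
Lemma Forall2_firstn {A B} (P : A -> B -> Prop) d l1 l2 : Forall2 P l1 l2 -> Forall2 P (firstn d l1) (firstn d l2).
Proof. revert l1 l2; induction d; intros l1 l2 H; simpl; [constructor|]. destruct H; simpl; constructor; auto. Qed.
Lemma Forall2_skipn {A B} (P : A -> B -> Prop) d l1 l2 : Forall2 P l1 l2 -> Forall2 P (skipn d l1) (skipn d l2).
Proof. revert l1 l2; induction d; intros l1 l2 H; simpl; auto. destruct H; simpl; [constructor|auto]. Qed.

Lemma enc_add p q t x y : enc p t x -> enc q t y -> enc (padd p q) t (x + y).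
Proof. intros [cs [H1 ->]] [ds [H2 ->]]. exists (paddR cs ds); split; [apply padd_ok; auto| rewrite peval_paddR; auto]. Qed.
Lemma enc_neg p t x : enc p t x -> enc (pneg p) t (- x).
Proof. intros [cs [H1 ->]]. exists (map Ropp cs); split; [apply pneg_ok; auto| rewrite peval_neg; auto]. Qed.
Lemma enc_mul p q t x y : enc p t x -> enc q t y -> enc (pmul p q) t (x * y).
Proof. intros [cs [H1 ->]] [ds [H2 ->]]. exists (pmulR cs ds); split; [apply pmul_ok; auto| rewrite peval_pmulR; auto]. Qed.
Lemma enc_trunc d h p t x : 0 <= t <= Q2R h -> enc p t x -> enc (trunc d h p) t x.
Proof.
  intros Ht [cs [H1 ->]]. exists (firstn d cs ++ peval (skipn d cs) t :: nil). split.
  - apply Forall2_app; [apply Forall2_firstn; auto| constructor; [apply ihorner_ok; auto; apply Forall2_skipn; auto| constructor]].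
  - rewrite peval_app. simpl. rewrite <- (firstn_skipn d cs) at 1. rewrite peval_app. ring.
Qed.
Lemma enc_const q t : enc ((q,q) :: nil) t (Q2R q).
Proof. exists (Q2R q :: nil). split; [constructor; [unfold inI; simpl; lra| constructor]| simpl; ring]. Qed.

Definition zipI (L U : list Q) : list I := map (fun lu => (qmin (fst lu) (snd lu), qmax (fst lu) (snd lu))) (combine L U).

Lemma enc_between L U t v : length L = length U ->
  peval (map Q2R L) t <= v <= peval (map Q2R U) t -> enc (zipI L U) t v.
Proof.
  intros Hlen Hv.
  set (PL := peval (map Q2R L) t) in *. set (PU := peval (map Q2R U) t) in *.
  assert (exists th, 0 <= th <= 1 /\ v = PL + th * (PU - PL)) as [th [Hth ->]].
  { destruct (Req_dec PU PL) as [E|E].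
    - exists 0; split; [lra|]. lra.
    - exists ((v - PL)/(PU - PL)). assert (0 < PU - PL) by lra. split.
      + split; [apply Rmult_le_pos; [lra| left; apply Rinv_0_lt_compat; lra]|].
        apply (Rmult_le_reg_r (PU - PL)); auto. unfold Rdiv; rewrite Rmult_assoc, Rinv_l; lra.
      + field. lra. }
  exists (map (fun lu => Q2R (fst lu) + th * (Q2R (snd lu) - Q2R (fst lu))) (combine L U)).
  unfold PL, PU; clear PL PU Hv. split.
  - revert U Hlen; induction L as [|l L IH]; intros [|u U] Hlen; simpl in *; try discriminate; constructor; auto.
    unfold inI; simpl; rewrite qmin_R, qmax_R.
    destruct (Rle_dec (Q2R l) (Q2R u)).
    + rewrite Rmin_left, Rmax_right by lra. nra.
    + rewrite Rmin_right, Rmax_left by lra. nra.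
  - revert U Hlen; induction L as [|l L IH]; intros [|u U] Hlen; simpl in *; try discriminate; [ring|].
    rewrite <- IH by lia. ring.
Qed.

Lemma enc_lo p t v : 0 <= t -> enc p t v -> peval (map (fun i => Q2R (fst i)) p) t <= v.
Proof.
  intros Ht [cs [H ->]]. induction H as [|c a cs p Hca Hcs IH]; simpl; [lra|].
  destruct Hca. assert (0 <= t * (peval cs t - peval (map (fun i => Q2R (fst i)) p) t)) by (apply Rmult_le_pos; lra). nra.
Qed.
Lemma enc_hi p t v : 0 <= t -> enc p t v -> v <= peval (map (fun i => Q2R (snd i)) p) t.
Proof.
  intros Ht [cs [H ->]]. induction H as [|c a cs p Hca Hcs IH]; simpl; [lra|].
  destruct Hca. assert (0 <= t * (peval (map (fun i => Q2R (snd i)) p) t - peval cs t)) by (apply Rmult_le_pos; lra). nra.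
Qed.

Lemma enc_scale c a q t y : inI c a -> enc q t y -> enc (pscale a q) t (c * y).
Proof. intros Hc [ds [H ->]]. exists (map (Rmult c) ds); split; [apply pscale_ok; auto| rewrite peval_map_mult; auto]. Qed.

Fixpoint pfact (n : nat) : positive := match n with O => 1%positive | S k => (Pos.of_succ_nat k * pfact k)%positive end.
Lemma pfact_INR n : IZR (Zpos (pfact n)) = INR (Factorial.fact n).
Proof.
  induction n as [|k IH]; [reflexivity|].
  change (Factorial.fact (S k)) with (S k * Factorial.fact k)%nat.
  rewrite mult_INR, <- IH. simpl pfact. rewrite Pos2Z.inj_mul, mult_IZR.
  rewrite Zpos_P_of_succ_nat, <- Nat2Z.inj_succ, <- INR_IZR_INZ. reflexivity.
Qed.
Fixpoint zsgn (i : nat) : Z := match i with O => 1%Z | S k => (- zsgn k)%Z end.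
Lemma zsgn_pow i : IZR (zsgn i) = (-1) ^ i.
Proof. induction i; simpl; [reflexivity|]. rewrite opp_IZR, IHi. ring. Qed.

Definition scoef (i : nat) : Q := Qmake (zsgn i) (pfact (2 * i + 1)).
Definition ccoef (i : nat) : Q := Qmake (zsgn i) (pfact (2 * i)).
Fixpoint qsin (n : nat) : list Q := match n with O => 0%Q :: scoef 0 :: nil | S k => qsin k ++ 0%Q :: scoef (S k) :: nil end.
Fixpoint qcos (n : nat) : list Q := match n with O => ccoef 0 :: nil | S k => qcos k ++ 0%Q :: ccoef (S k) :: nil end.

Lemma qsin_len n : length (qsin n) = (2 * n + 2)%nat.
Proof. induction n; simpl; auto. rewrite length_app, IHn; simpl; lia. Qed.
Lemma qcos_len n : length (qcos n) = (2 * n + 1)%nat.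
Proof. induction n; simpl; auto. rewrite length_app, IHn; simpl; lia. Qed.

Lemma Q2R0 : Q2R 0 = 0. Proof. unfold Q2R; simpl; field. Qed.

Lemma qsin_ok n a : peval (map Q2R (qsin n)) a = sin_approx a n.
Proof.
  induction n as [|n IH].
  - unfold sin_approx, sin_term; simpl. unfold scoef; rewrite Q2R_make; try rewrite Q2R0. unfold Q2R; simpl. field.
  - simpl qsin. rewrite map_app, peval_app, IH, length_map, qsin_len.
    unfold sin_approx; simpl sum_f_R0. fold (sin_approx a n). unfold sin_term, scoef.
    cbn [map peval]. rewrite (Q2R_make (zsgn (S n))), Q2R0, zsgn_pow, pfact_INR.
    replace (2 * S n + 1)%nat with (S (2 * n + 2)) by lia. simpl pow. field.
    apply not_0_INR, Factorial.fact_neq_0.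
Qed.
Lemma qcos_ok n a : peval (map Q2R (qcos n)) a = cos_approx a n.
Proof.
  induction n as [|n IH].
  - unfold cos_approx, cos_term; simpl. unfold ccoef; rewrite Q2R_make. simpl. field.
  - simpl qcos. rewrite map_app, peval_app, IH, length_map, qcos_len.
    unfold cos_approx; simpl sum_f_R0. fold (cos_approx a n). unfold cos_term, ccoef.
    cbn [map peval]. rewrite (Q2R_make (zsgn (S n))), Q2R0, zsgn_pow, pfact_INR.
    replace (2 * S n)%nat with (S (2 * n + 1)) by lia. simpl pow. field.
    apply not_0_INR, Factorial.fact_neq_0.
Qed.

Definition sinE (m : nat) := zipI (qsin (2 * m + 1) ++ 0%Q :: 0%Q :: nil) (qsin (2 * (m + 1))).
Definition cosE (m : nat) := zipI (qcos (2 * m + 1) ++ 0%Q :: 0%Q :: nil) (qcos (2 * (m + 1))).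
Lemma peval_pad00 l t : peval (map Q2R (l ++ 0%Q :: 0%Q :: nil)) t = peval (map Q2R l) t.
Proof. rewrite map_app, peval_app; cbn [map peval]. rewrite Q2R0; ring. Qed.

Lemma enc_sinE m t : 0 <= t <= PI -> enc (sinE m) t (sin t).
Proof.
  intros Ht. apply enc_between.
  - rewrite length_app, !qsin_len; simpl; lia.
  - rewrite peval_pad00, !qsin_ok. apply sin_bound; lra.
Qed.
Lemma enc_cosE m t : - PI / 2 <= t <= PI / 2 -> enc (cosE m) t (cos t).
Proof.
  intros Ht. apply enc_between.
  - rewrite length_app, !qcos_len; simpl; lia.
  - rewrite peval_pad00, !qcos_ok. apply cos_bound; lra.
Qed.

Fixpoint qpeval (l : list Q) (x : Q) : Q := match l with nil => 0%Q | c :: l' => (c + x * qpeval l' x)%Q end.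
Lemma qpeval_ok l x : Q2R (qpeval l x) = peval (map Q2R l) (Q2R x).
Proof. induction l; simpl; [apply Q2R0| rewrite Q2R_plus, Q2R_mult, IHl; auto]. Qed.

Definition sinI (m : nat) (x : Q) : I := (rdn (qpeval (qsin (2 * m + 1)) x), rup (qpeval (qsin (2 * (m + 1))) x)).
Definition cosI (m : nat) (x : Q) : I := (rdn (qpeval (qcos (2 * m + 1)) x), rup (qpeval (qcos (2 * (m + 1))) x)).
Lemma sinI_ok m x : 0 <= Q2R x <= PI -> inI (sin (Q2R x)) (sinI m x).
Proof. intros H; unfold inI, sinI; cbn [fst snd]. pose proof (rdn_le (qpeval (qsin (2 * m + 1)) x)). pose proof (rup_ge (qpeval (qsin (2 * (m + 1))) x)).
  rewrite !qpeval_ok, !qsin_ok in *. pose proof (sin_bound (Q2R x) m ltac:(lra) ltac:(lra)). lra. Qed.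
Lemma cosI_ok m x : - PI / 2 <= Q2R x <= PI / 2 -> inI (cos (Q2R x)) (cosI m x).
Proof. intros H; unfold inI, cosI; cbn [fst snd]. pose proof (rdn_le (qpeval (qcos (2 * m + 1)) x)). pose proof (rup_ge (qpeval (qcos (2 * (m + 1))) x)).
  rewrite !qpeval_ok, !qcos_ok in *. pose proof (cos_bound (Q2R x) m ltac:(lra) ltac:(lra)). lra. Qed.

Inductive ex := EX | ES | EC | EK (q : Q) | EAdd (a b : ex) | ESub (a b : ex) | EMul (a b : ex) | EPow (a : ex) (n : nat).
Fixpoint evalR (x s c : R) (e : ex) : R :=
  match e with
  | EX => x | ES => s | EC => c | EK q => Q2R q
  | EAdd a b => evalR x s c a + evalR x s c b
  | ESub a b => evalR x s c a - evalR x s c b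
  | EMul a b => evalR x s c a * evalR x s c b
  | EPow a n => evalR x s c a ^ n
  end.
Fixpoint ipow (d : nat) (h : Q) (P : list I) (n : nat) : list I :=
  match n with O => (1,1)%Q :: nil | S k => trunc d h (pmul P (ipow d h P k)) end.
Fixpoint evalI (d : nat) (h : Q) (px ps pc : list I) (e : ex) : list I :=
  match e with
  | EX => px | ES => ps | EC => pc | EK q => (q,q) :: nil
  | EAdd a b => padd (evalI d h px ps pc a) (evalI d h px ps pc b)
  | ESub a b => padd (evalI d h px ps pc a) (pneg (evalI d h px ps pc b))
  | EMul a b => trunc d h (pmul (evalI d h px ps pc a) (evalI d h px ps pc b))
  | EPow a n => ipow d h (evalI d h px ps pc a) n
  end.

Lemma Q2R1 : Q2R 1 = 1. Proof. unfold Q2R; simpl; field. Qed.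

Lemma evalI_ok d h px ps pc t x s c e : 0 <= t <= Q2R h ->
  enc px t x -> enc ps t s -> enc pc t c -> enc (evalI d h px ps pc e) t (evalR x s c e).
Proof.
  intros Ht Hx Hs Hc. induction e; simpl; auto.
  - apply enc_const.
  - apply enc_add; auto.
  - unfold Rminus; apply enc_add; auto; apply enc_neg; auto.
  - apply enc_trunc; auto; apply enc_mul; auto.
  - induction n; simpl.
    + pose proof (enc_const 1 t) as H; rewrite Q2R1 in H; exact H.
    + apply enc_trunc; auto; apply enc_mul; auto.
Qed.

Definition qneg0 (b : Q) : Q := qmax 0 (- b).
Definition poslo (k : nat) (h : Q) (p : list I) : bool :=
  let A := map fst p in
  forallb (fun a => Qle_bool 0 a) (firstn k A) &&
  match skipn k A with
  | nil => false
  | b0 :: B => negb (Qle_bool (b0 - h * qpeval (map qneg0 B) h) 0)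
  end.

Lemma peval_nonneg l t : 0 <= t -> Forall (fun a => 0 <= a) l -> 0 <= peval l t.
Proof. intros Ht H; induction H; simpl; [lra|]. apply Rplus_le_le_0_compat; auto. apply Rmult_le_pos; auto. Qed.
Lemma peval_mono l t h : 0 <= t <= h -> Forall (fun a => 0 <= a) l -> peval l t <= peval l h.
Proof.
  intros Ht H; induction H; simpl; [lra|].
  assert (0 <= peval l t) by (apply peval_nonneg; auto; lra).
  assert (t * peval l t <= h * peval l h). { apply Rmult_le_compat; lra. }
  lra.
Qed.
Lemma qneg0_R b : Q2R (qneg0 b) = Rmax 0 (- Q2R b).
Proof. unfold qneg0; rewrite qmax_R, Q2R_opp, Q2R0; auto. Qed.
Lemma peval_negpart B t : 0 <= t -> peval (map Q2R B) t + peval (map Q2R (map qneg0 B)) t >= 0.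
Proof.
  intros Ht; induction B as [|b B IH]; simpl; [lra|].
  rewrite qneg0_R. assert (Q2R b + Rmax 0 (- Q2R b) >= 0). { destruct (Rle_dec 0 (- Q2R b)); [rewrite Rmax_right|rewrite Rmax_left]; lra. }
  assert (t * (peval (map Q2R B) t + peval (map Q2R (map qneg0 B)) t) >= 0). { apply Rle_ge, Rmult_le_pos; lra. }
  nra.
Qed.
Lemma negpart_nonneg B : Forall (fun a => 0 <= a) (map Q2R (map qneg0 B)).
Proof. induction B; simpl; constructor; auto. rewrite qneg0_R; apply Rmax_l. Qed.

Lemma poslo_ok k h p t v : poslo k h p = true -> enc p t v -> 0 <= t <= Q2R h -> (0 < t \/ k = 0%nat) -> 0 < v.
Proof.
  unfold poslo. intros Hb He Ht Htk. apply andb_prop in Hb as [Hf Hs].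
  pose proof (enc_lo p t v (proj1 Ht) He) as Hlo.
  set (A := map fst p) in *.
  assert (map (fun i => Q2R (fst i)) p = map Q2R A) as EA by (unfold A; rewrite map_map; auto).
  rewrite EA in Hlo. rewrite <- (firstn_skipn k A) in Hlo. rewrite map_app, peval_app in Hlo.
  destruct (skipn k A) as [|b0 B] eqn:ES; [discriminate|].
  assert (0 <= peval (map Q2R (firstn k A)) t).
  { apply peval_nonneg; [lra|]. pose proof (proj1 (forallb_forall _ _) Hf) as Hf2. apply Forall_forall. intros a Ha.
    apply in_map_iff in Ha as [q [<- Hq]]. apply Hf2 in Hq. apply Qle_bool_iff, Qle_Rle in Hq. rewrite Q2R0 in Hq; auto. }
  assert (length (map Q2R (firstn k A)) = k) as Hl.
  { rewrite length_map, length_firstn. assert (k <= length A)%nat.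
    { destruct (Nat.le_gt_cases k (length A)); auto. rewrite skipn_all2 in ES by lia. discriminate. }
    lia. }
  rewrite Hl in Hlo.
  assert (0 < peval (map Q2R (b0 :: B)) t).
  { cbn [map peval].
    pose proof (peval_negpart B t (proj1 Ht)).
    pose proof (peval_mono (map Q2R (map qneg0 B)) t (Q2R h) Ht (negpart_nonneg B)).
    pose proof (peval_nonneg (map Q2R (map qneg0 B)) t (proj1 Ht) (negpart_nonneg B)).
    assert (~ (b0 - h * qpeval (map qneg0 B) h <= 0)%Q).
    { intro Hc. apply Qle_bool_iff in Hc. rewrite Hc in Hs. discriminate. }
    apply Qnot_le_lt, Qlt_Rlt in H3. rewrite Q2R0 in H3. unfold Qminus in H3.
    rewrite Q2R_plus, Q2R_opp, Q2R_mult, qpeval_ok in H3.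
    assert (t * peval (map Q2R (map qneg0 B)) t <= Q2R h * peval (map Q2R (map qneg0 B)) (Q2R h)).
    { apply Rmult_le_compat; lra. }
    nra. }
  assert (0 < t ^ k). { destruct Htk as [Htp| ->]; [apply pow_lt; auto| simpl; lra]. }
  nra.
Qed.

Definition pX (x0 : Q) : list I := (x0, x0) :: (1, 1)%Q :: nil.
Definition pS (d m : nat) (h x0 : Q) : list I :=
  trunc d h (padd (pscale (sinI m x0) (cosE m)) (pscale (cosI m x0) (sinE m))).
Definition pC (d m : nat) (h x0 : Q) : list I :=
  trunc d h (padd (pscale (cosI m x0) (cosE m)) (pneg (pscale (sinI m x0) (sinE m)))).
Definition check (e : ex) (d m : nat) (h x0 : Q) (k : nat) : bool :=
  poslo k h (evalI d h (pX x0) (pS d m h x0) (pC d m h x0) e).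

Lemma check_ok e d m h x0 k t : check e d m h x0 k = true ->
  0 <= Q2R x0 <= PI / 2 -> Q2R h <= 3/2 -> 0 <= t <= Q2R h -> (0 < t \/ k = 0%nat) ->
  0 < evalR (Q2R x0 + t) (sin (Q2R x0 + t)) (cos (Q2R x0 + t)) e.
Proof.
  intros Hc Hx0 Hh Ht Htk. pose proof PI2_3_2.
  assert (Et : enc (sinE m) t (sin t)) by (apply enc_sinE; lra).
  assert (Ec : enc (cosE m) t (cos t)) by (apply enc_cosE; lra).
  assert (Is : inI (sin (Q2R x0)) (sinI m x0)) by (apply sinI_ok; lra).
  assert (Ic : inI (cos (Q2R x0)) (cosI m x0)) by (apply cosI_ok; lra).
  eapply poslo_ok; [exact Hc| |exact Ht|exact Htk].
  apply evalI_ok; auto.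
  - exists (Q2R x0 :: 1 :: nil); split.
    + constructor; [unfold inI; simpl; lra| constructor; [unfold inI; simpl; rewrite Q2R1; lra| constructor]].
    + simpl; ring.
  - unfold pS; apply enc_trunc; auto. rewrite sin_plus. apply enc_add; apply enc_scale; auto.
  - unfold pC; apply enc_trunc; auto. rewrite cos_plus. unfold Rminus. apply enc_add; [apply enc_scale; auto|].
    apply enc_neg; apply enc_scale; auto.
Qed.

Lemma last_cons' {A} (a d : A) l : last (a :: l) d = last l a.
Proof. revert a d; induction l as [|b l IH]; intros a d; [reflexivity|].
  change (last (a :: b :: l) d) with (last (b :: l) d). rewrite !IH. reflexivity. Qed.

Fixpoint check_pts (e : ex) (d m : nat) (B : Q) (k : nat) (p : Q) (rest : list Q) : bool :=
  match rest with
  | nil => true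
  | q :: rest' => Qle_bool 0 p && Qle_bool p B && negb (Qle_bool q p) && Qle_bool (q - p) (3#2)
                  && check e d m (q - p) p k && check_pts e d m B 0 q rest'
  end.

Lemma check_pts_ok e d m B k p rest : check_pts e d m B k p rest = true -> Q2R B <= PI / 2 ->
  forall x, Q2R p < x <= Q2R (last rest p) -> 0 < evalR x (sin x) (cos x) e.
Proof.
  revert k p; induction rest as [|q rest IH]; intros k p Hc HB x Hx.
  - simpl in Hx; lra.
  - simpl in Hc.
    apply andb_prop in Hc as [Hc Hf]. apply andb_prop in Hc as [Hc He].
    apply andb_prop in Hc as [Hc Hd]. apply andb_prop in Hc as [Hc Hcc].
    apply andb_prop in Hc as [Ha Hb].
    apply Qle_bool_iff, Qle_Rle in Ha. rewrite Q2R0 in Ha.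
    apply Qle_bool_iff, Qle_Rle in Hb.
    assert (Hpq : Q2R p < Q2R q). { assert (~ (q <= p)%Q) by (intro Hn; apply Qle_bool_iff in Hn; rewrite Hn in Hcc; discriminate).
      apply Qnot_le_lt, Qlt_Rlt in H; auto. }
    apply Qle_bool_iff, Qle_Rle in Hd. unfold Qminus in Hd; rewrite Q2R_plus, Q2R_opp in Hd.
    replace (Q2R (3#2)) with (3/2) in Hd by (unfold Q2R; simpl; field).
    destruct (Rle_dec x (Q2R q)) as [Hxq|Hxq].
    + replace x with (Q2R p + (x - Q2R p)) by ring.
      eapply check_ok; [exact He| lra | unfold Qminus; rewrite Q2R_plus, Q2R_opp; lra
                       | unfold Qminus; rewrite Q2R_plus, Q2R_opp; lra | left; lra].
    + apply (IH 0%nat q); auto. split; [lra|]. rewrite last_cons' in Hx. lra.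
Qed.

Definition upper_at (e : ex) (d m : nat) (h x0 t : Q) : Q :=
  qpeval (map snd (evalI d h (pX x0) (pS d m h x0) (pC d m h x0) e)) t.
Lemma upper_at_ok e d m h x0 t : 0 <= Q2R x0 <= PI / 2 -> Q2R h <= 3/2 -> 0 <= Q2R t <= Q2R h ->
  evalR (Q2R x0 + Q2R t) (sin (Q2R x0 + Q2R t)) (cos (Q2R x0 + Q2R t)) e <= Q2R (upper_at e d m h x0 t).
Proof.
  intros Hx0 Hh Ht. pose proof PI2_3_2.
  assert (Et : enc (sinE m) (Q2R t) (sin (Q2R t))) by (apply enc_sinE; lra).
  assert (Ec : enc (cosE m) (Q2R t) (cos (Q2R t))) by (apply enc_cosE; lra).
  assert (Is : inI (sin (Q2R x0)) (sinI m x0)) by (apply sinI_ok; lra).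
  assert (Ic : inI (cos (Q2R x0)) (cosI m x0)) by (apply cosI_ok; lra).
  unfold upper_at. rewrite qpeval_ok, map_map. apply enc_hi; [lra|].
  apply evalI_ok; auto.
  - exists (Q2R x0 :: 1 :: nil); split.
    + constructor; [unfold inI; simpl; lra| constructor; [unfold inI; simpl; rewrite Q2R1; lra| constructor]].
    + simpl; ring.
  - unfold pS; apply enc_trunc; auto. rewrite sin_plus. apply enc_add; apply enc_scale; auto.
  - unfold pC; apply enc_trunc; auto. rewrite cos_plus. unfold Rminus. apply enc_add; [apply enc_scale; auto|].
    apply enc_neg; apply enc_scale; auto.
Qed.

End MachM.

Module TrigM.
Import MachM.
Import ListNotations.
Open Scope R_scope.
Open Scope R_scope.

Definition eD := ESub ES (EMul EX EC).
Definition eE := ESub EX (EMul ES EC).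
Definition eN := EAdd (ESub (EMul eD eE) (EMul (EMul (EK 5) EX) (EMul EC eE))) (EMul (EMul (EK 10) ES) (EMul EC eD)).
Definition eT2 := ESub eE (EMul (EK 2) (EMul EC eD)).
Definition pl : Q := 35#39.
Definition qq : Q := 6#59.
Definition eT4 := ESub (EMul (EK 2) (EMul EC eD)) (EMul (EAdd (EK 1) (EMul (EK pl) (ESub EC (EK 1)))) eE).
Definition eT6 := ESub (EMul (EK 32) (EMul EC (EPow eD 5))) (EMul (EPow eE 5) (ESub (EK 1) (EMul (EK (1#5)) (EPow EX 4)))).
Definition eL (g G : Q) := EMul (EK G) (EAdd (EK 1) (EMul (EK qq) (ESub (EMul EC (EK (/ g))) (EK 1)))).
Definition eT5 (g G : Q) := ESub eE (EMul (EMul (EK 2) eD) (eL g G)).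
Definition eMid (w g A G : Q) :=
  ESub (EMul EX EC)
       (EMul (ESub (EMul (EMul (EK 3) (EK A)) (EAdd EX (EMul (EK pl) (ESub (EMul ES (EK (/ w))) EX)))) (EMul (EK 2) EX))
             (eL g G)).

Definition Bq : Q := 15707#10000.
Lemma PI2_lb : Q2R Bq < PI / 2.
Proof.
  pose proof PI2_3_2. pose proof PI_RGT_0.
  assert (Hc : check_pts EC 10 3 (3#2) 0 (3#2) [Bq] = true) by (vm_compute; reflexivity).
  pose proof (check_pts_ok _ _ _ _ _ _ _ Hc ltac:(unfold Q2R; simpl; lra) (Q2R Bq)) as H1.
  simpl in H1. assert (Q2R (3#2) = 3/2) by (unfold Q2R; simpl; field).
  assert (Q2R Bq = 15707/10000) by (unfold Q2R, Bq; simpl; field).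
  specialize (H1 ltac:(lra)).
  destruct (Rlt_le_dec (Q2R Bq) (PI/2)) as [|Hle]; auto.
  pose proof (cos_le_0 (Q2R Bq) Hle ltac:(lra)). lra.
Qed.

Lemma PI2_ub : PI / 2 < 15709 / 10000.
Proof.
  pose proof PI2_lb. pose proof PI2_3_2.
  assert (Bv : Q2R Bq = 15707/10000) by (unfold Q2R, Bq; simpl; field).
  pose proof (upper_at_ok EC 10 3 (2#10000) Bq (2#10000)) as Hu.
  assert (Q2R (2#10000) = 2/10000) by (unfold Q2R; simpl; field).
  specialize (Hu ltac:(lra) ltac:(lra) ltac:(lra)). simpl in Hu.
  assert (Hv : (upper_at EC 10 3 (2#10000) Bq (2#10000) < 0)%Q) by (vm_compute; reflexivity).
  apply Qlt_Rlt in Hv. rewrite Q2R0 in Hv.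
  destruct (Rlt_le_dec (PI/2) (15709/10000)) as [|Hle]; auto.
  pose proof (cos_ge_0 (Q2R Bq + Q2R (2#10000)) ltac:(lra) ltac:(lra)). lra.
Qed.

Definition Dx x := sin x - x * cos x.
Definition Ex x := x - sin x * cos x.
Definition Q2 : Q := 15709#10000.
Lemma Q2v : Q2R Q2 = 15709/10000. Proof. unfold Q2R, Q2; simpl; field. Qed.
Lemma Bqv : Q2R Bq = 15707/10000. Proof. unfold Q2R, Bq; simpl; field. Qed.
Lemma Q0v : Q2R 0 = 0. Proof. unfold Q2R; simpl; field. Qed.
Lemma Q32v : Q2R (3#2) = 3/2. Proof. unfold Q2R; simpl; field. Qed.
Lemma Bq_ok : Q2R Bq <= PI/2. Proof. pose proof PI2_lb; lra. Qed.

Ltac evalq := cbn [evalR eN eD eE eT2 eT4 eT6 eL eT5 eMid]; try (unfold Q2R; simpl; field).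

Definition Nf x := Dx x * Ex x - 5 * x * (cos x * Ex x) + 10 * sin x * (cos x * Dx x).
Lemma T1 x : 0 < x < PI/2 -> 0 < Nf x.
Proof.
  intros Hx. pose proof PI2_ub.
  assert (E : evalR x (sin x) (cos x) eN = Nf x) by (unfold Nf, Dx, Ex; evalq).
  rewrite <- E. destruct (Rle_dec x (3/2)).
  - assert (Hc : check_pts eN 20 4 Bq 8 0 [3#2] = true) by (vm_compute; reflexivity).
    apply (check_pts_ok _ _ _ _ _ _ _ Hc Bq_ok). simpl. rewrite Q0v, Q32v; lra.
  - assert (Hc : check_pts eN 6 3 Bq 0 (3#2) [Q2] = true) by (vm_compute; reflexivity).
    apply (check_pts_ok _ _ _ _ _ _ _ Hc Bq_ok). simpl. rewrite Q2v, Q32v; lra.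
Qed.

Lemma chk_gen e d m k a pts (f : R -> R) : check_pts e d m Bq k a pts = true ->
  (forall x, evalR x (sin x) (cos x) e = f x) -> forall x, Q2R a < x <= Q2R (last pts a) -> 0 < f x.
Proof. intros Hc Hf x Hx. rewrite <- Hf. apply (check_pts_ok _ _ _ _ _ _ _ Hc Bq_ok); auto. Qed.

Lemma T2 x : 0 < x < PI/2 -> 0 < Ex x - 2 * (cos x * Dx x).
Proof.
  intros Hx. pose proof PI2_ub. destruct (Rle_dec x (3/2)).
  - apply (chk_gen eT2 20 4 5 0 [3#2] (fun x => Ex x - 2 * (cos x * Dx x))); [vm_compute; reflexivity| intros; unfold Dx, Ex; evalq| simpl; rewrite Q0v, Q32v; lra].
  - apply (chk_gen eT2 6 3 0 (3#2) [Q2] (fun x => Ex x - 2 * (cos x * Dx x))); [vm_compute; reflexivity| intros; unfold Dx, Ex; evalq| simpl; rewrite Q2v, Q32v; lra].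
Qed.
Lemma T3D x : 0 < x < PI/2 -> 0 < Dx x.
Proof.
  intros Hx. pose proof PI2_ub. destruct (Rle_dec x (3/2)).
  - apply (chk_gen eD 20 4 3 0 [3#2] Dx); [vm_compute; reflexivity| intros; unfold Dx; evalq| simpl; rewrite Q0v, Q32v; lra].
  - apply (chk_gen eD 6 3 0 (3#2) [Q2] Dx); [vm_compute; reflexivity| intros; unfold Dx; evalq| simpl; rewrite Q2v, Q32v; lra].
Qed.
Lemma T3E x : 0 < x < PI/2 -> 0 < Ex x.
Proof.
  intros Hx. pose proof PI2_ub. destruct (Rle_dec x (3/2)).
  - apply (chk_gen eE 20 4 3 0 [3#2] Ex); [vm_compute; reflexivity| intros; unfold Ex; evalq| simpl; rewrite Q0v, Q32v; lra].
  - apply (chk_gen eE 6 3 0 (3#2) [Q2] Ex); [vm_compute; reflexivity| intros; unfold Ex; evalq| simpl; rewrite Q2v, Q32v; lra].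
Qed.

Lemma plv : Q2R pl = 35/39. Proof. unfold Q2R, pl; simpl; field. Qed.
Lemma qqv : Q2R qq = 6/59. Proof. unfold Q2R, qq; simpl; field. Qed.

Lemma T4 x : 0 < x <= 21/20 -> 0 < 2 * (cos x * Dx x) - (1 + 35/39 * (cos x - 1)) * Ex x.
Proof.
  intros Hx. set (f := fun x => 2 * (cos x * Dx x) - (1 + 35/39 * (cos x - 1)) * Ex x).
  change (0 < f x). assert (Hf : forall x, evalR x (sin x) (cos x) eT4 = f x) by (intros; unfold f, Dx, Ex, pl; evalq).
  destruct (Rle_dec x (3/4)).
  - apply (chk_gen eT4 20 4 5 0 [3#4] f); [vm_compute; reflexivity| auto| simpl; unfold Q2R; simpl; lra].
  - apply (chk_gen eT4 10 4 0 (3#4) [17#20; 19#20; 21#20] f); [vm_compute; reflexivity| auto| simpl; unfold Q2R; simpl; lra].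
Qed.

Lemma T6 x : 0 < x <= 1/2 -> 0 < 32 * (cos x * Dx x ^ 5) - Ex x ^ 5 * (1 - 1/5 * x ^ 4).
Proof.
  intros Hx. set (f := fun x => 32 * (cos x * Dx x ^ 5) - Ex x ^ 5 * (1 - 1/5 * x ^ 4)).
  change (0 < f x). assert (Hf : forall x, evalR x (sin x) (cos x) eT6 = f x) by (intros; unfold f, Dx, Ex; evalq).
  apply (chk_gen eT6 30 5 19 0 [1#2] f); [vm_compute; reflexivity| auto| simpl; unfold Q2R; simpl; lra].
Qed.

Lemma T5 x : 145/100 < x < PI/2 ->
  0 < Ex x - 2 * Dx x * (1613/2000 * (1 + 6/59 * (cos x * / (603/5000) - 1))) /\ 0 < 603/5000 - cos x.
Proof.
  intros Hx. pose proof PI2_ub. split.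
  - set (f := fun x => Ex x - 2 * Dx x * (1613/2000 * (1 + 6/59 * (cos x * / (603/5000) - 1)))).
    change (0 < f x). assert (Hf : forall x, evalR x (sin x) (cos x) (eT5 (603#5000) (1613#2000)) = f x)
      by (intros; unfold f, Dx, Ex, qq; evalq).
    apply (chk_gen (eT5 (603#5000) (1613#2000)) 10 3 0 (145#100) [Q2] f); [vm_compute; reflexivity| auto| simpl; rewrite Q2v; unfold Q2R; simpl; lra].
  - set (f := fun x => 603/5000 - cos x). change (0 < f x).
    assert (Hf : forall x, evalR x (sin x) (cos x) (ESub (EK (603#5000)) EC) = f x) by (intros; unfold f; evalq).
    apply (chk_gen (ESub (EK (603#5000)) EC) 10 3 0 (145#100) [3#2; Q2] f); [vm_compute; reflexivity| auto| simpl; rewrite Q2v; unfold Q2R; simpl; lra].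
Qed.

Definition fmid (w g A G x : R) :=
  x * cos x - (3 * A * (x + 35/39 * (sin x * / w - x)) - 2 * x) * (G * (1 + 6/59 * (cos x * / g - 1))).

Ltac midtac a b w g A G :=
  let x := fresh "x" in let Hx := fresh "Hx" in
  intros x Hx; split; [|split];
  [ apply (chk_gen (eMid w g A G) 10 3 0 a [b] (fmid (Q2R w) (Q2R g) (Q2R A) (Q2R G)));
      [vm_compute; reflexivity| intros; unfold fmid, pl, qq; evalq | simpl; unfold Q2R in *; simpl in *; lra]
  | apply (chk_gen (ESub (EMul (EK w) EX) ES) 10 3 0 a [b] (fun x => Q2R w * x - sin x));
      [vm_compute; reflexivity| intros; evalq | simpl; unfold Q2R in *; simpl in *; lra]
  | apply (chk_gen (ESub (EK g) EC) 10 3 0 a [b] (fun x => Q2R g - cos x));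
      [vm_compute; reflexivity| intros; evalq | simpl; unfold Q2R in *; simpl in *; lra] ].

Definition midP (a b w g A G : Q) := forall x, Q2R a < x <= Q2R b ->
  0 < fmid (Q2R w) (Q2R g) (Q2R A) (Q2R G) x /\ 0 < Q2R w * x - sin x /\ 0 < Q2R g - cos x.

Lemma Mid1 : midP (105#100) (115#100) (207#250) (499#1000) (4221#5000) (4659#5000).
Proof. midtac (105#100) (115#100) (207#250) (499#1000) (4221#5000) (4659#5000). Qed.
Lemma Mid2 : midP (115#100) (125#100) (159#200) (41#100) (407#500) (4567#5000).
Proof. midtac (115#100) (125#100) (159#200) (41#100) (407#500) (4567#5000). Qed.
Lemma Mid3 : midP (125#100) (135#100) (761#1000) (317#1000) (7827#10000) (4449#5000).
Proof. midtac (125#100) (135#100) (761#1000) (317#1000) (7827#10000) (4449#5000). Qed.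
Lemma Mid4 : midP (135#100) (145#100) (181#250) (221#1000) (1871#2500) (8577#10000).
Proof. midtac (135#100) (145#100) (181#250) (221#1000) (1871#2500) (8577#10000). Qed.

End TrigM.

From Coquelicot Require Import Coquelicot.
Import TrigM.
Open Scope R_scope.

Module AnalM.
Open Scope R_scope.

Lemma exp_ge1 u : 1 + u <= exp u.
Proof. destruct (Req_dec u 0) as [->|H]; [rewrite exp_0; lra| left; apply exp_ineq1; auto]. Qed.
Lemma ln_le_sub1 z : 0 < z -> ln z <= z - 1.
Proof. intros Hz. pose proof (exp_ge1 (ln z)). rewrite exp_ln in H; lra. Qed.
Lemma ln_ge_1inv z : 0 < z -> 1 - / z <= ln z.
Proof. intros Hz. pose proof (ln_le_sub1 (/ z) (Rinv_0_lt_compat _ Hz)). rewrite ln_Rinv in H; lra. Qed.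
Lemma ln_le_mono a b : 0 < a -> a <= b -> ln a <= ln b.
Proof. intros Ha [H|H]; [left; apply ln_increasing; auto| subst; lra]. Qed.
Lemma ln_lt_0' a : 0 < a < 1 -> ln a < 0.
Proof. intros H. rewrite <- ln_1. apply ln_increasing; lra. Qed.
Lemma exp_le_mono a b : a <= b -> exp a <= exp b.
Proof. intros [H|H]; [left; apply exp_increasing; auto| subst; lra]. Qed.

Lemma rpow_pos a r : 0 < Rpower a r.
Proof. unfold Rpower; apply exp_pos. Qed.
Lemma rpow_dec a r1 r2 : 0 < a < 1 -> r1 <= r2 -> Rpower a r2 <= Rpower a r1.
Proof. intros Ha Hr. unfold Rpower. apply exp_le_mono. pose proof (ln_lt_0' a Ha). nra. Qed.
Lemma rpow_dec_lt a r1 r2 : 0 < a < 1 -> r1 < r2 -> Rpower a r2 < Rpower a r1.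
Proof. intros Ha Hr. unfold Rpower. apply exp_increasing. pose proof (ln_lt_0' a Ha). nra. Qed.
Lemma rpow_1 a : 0 < a -> Rpower a 1 = a.
Proof. apply Rpower_1. Qed.
Lemma rpow_one r : Rpower 1 r = 1.
Proof. unfold Rpower; rewrite ln_1, Rmult_0_r; apply exp_0. Qed.
Lemma rpow_mono_base a b r : 0 < r -> 0 < a <= b -> Rpower a r <= Rpower b r.
Proof. intros; apply Rle_Rpower_l; lra. Qed.
Lemma rpow_lt1 a r : 0 < a < 1 -> 0 < r -> Rpower a r < 1.
Proof. intros. replace 1 with (Rpower a 0) by (apply Rpower_O; lra). apply rpow_dec_lt; lra. Qed.

Lemma cos_ub4 x : 0 <= x <= PI / 2 -> cos x <= 1 - x^2/2 + x^4/24.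
Proof. intros H. pose proof PI_RGT_0. pose proof (cos_bound x 0 ltac:(lra) ltac:(lra)) as [_ H1].
  replace (cos_approx x (2 * (0 + 1))) with (1 - x^2/2 + x^4/24) in H1 by (unfold cos_approx, cos_term; simpl; field). auto. Qed.
Lemma cos_lb2 x : 0 <= x <= PI / 2 -> 1 - x^2/2 <= cos x.
Proof. intros H. pose proof PI_RGT_0. pose proof (cos_bound x 0 ltac:(lra) ltac:(lra)) as [H1 _].
  replace (cos_approx x (2 * 0 + 1)) with (1 - x^2/2) in H1 by (unfold cos_approx, cos_term; simpl; field). auto. Qed.
Lemma sin_lb3 x : 0 <= x <= PI -> x - x^3/6 <= sin x.
Proof. intros H. pose proof (sin_bound x 0 ltac:(lra) ltac:(lra)) as [H1 _].
  replace (sin_approx x (2 * 0 + 1)) with (x - x^3/6) in H1 by (unfold sin_approx, sin_term; simpl; field). auto. Qed.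

Lemma trig_basic x : 0 < x < PI / 2 -> 0 < sin x /\ sin x < x /\ 0 < cos x /\ cos x < 1.
Proof.
  intros Hx. pose proof PI_RGT_0. repeat split.
  - apply sin_gt_0; lra.
  - apply sin_lt_x; lra.
  - apply cos_gt_0; lra.
  - pose proof (cos_ub4 x ltac:(lra)). pose proof PI2_ub.
    assert (0 < x^2 * (12 - x^2)) by (apply Rmult_lt_0_compat; nra).
    assert (x^4 = x^2 * x^2) by ring. nra.
Qed.

Lemma bern r z : 0 < r < 1 -> 0 < z -> Rpower z r <= 1 + r * (z - 1).
Proof.
  intros Hr Hz.
  set (f := fun y => 1 + r * (y - 1) - Rpower y r).
  set (f' := fun y => r - r * Rpower y (r - 1)).
  assert (Hd : forall y, 0 < y -> derivable_pt_lim f y (f' y)).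
  { intros y Hy. unfold f, f'. replace (r - r * Rpower y (r - 1)) with (0 + r * (1 - 0) - r * Rpower y (r - 1)) by ring.
    apply derivable_pt_lim_minus; [|apply derivable_pt_lim_power; auto].
    apply derivable_pt_lim_plus; [apply derivable_pt_lim_const|].
    apply derivable_pt_lim_scal. apply derivable_pt_lim_minus; [apply derivable_pt_lim_id| apply derivable_pt_lim_const]. }
  assert (f 1 = 0) by (unfold f; rewrite rpow_one; ring).
  enough (0 <= f z) by (unfold f in H0; lra).
  destruct (Rtotal_order z 1) as [Hlt|[Heq|Hgt]].
  - destruct (MVT_cor2 f f' z 1 Hlt) as [c [Hc1 Hc2]]; [intros; apply Hd; lra|].
    assert (f' c < 0). { unfold f'. assert (1 < Rpower c (r - 1)).
      { pose proof (rpow_dec_lt c (r - 1) 0 ltac:(lra) ltac:(lra)) as Hq. rewrite Rpower_O in Hq by lra. lra. } nra. }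
    nra.
  - subst; lra.
  - destruct (MVT_cor2 f f' 1 z Hgt) as [c [Hc1 Hc2]]; [intros; apply Hd; lra|].
    assert (0 < f' c). { unfold f'. assert (Rpower c (r - 1) < 1).
      { assert (0 < ln c) by (rewrite <- ln_1; apply ln_increasing; lra).
        unfold Rpower. apply Rlt_le_trans with (exp 0); [apply exp_increasing; nra| rewrite exp_0; lra]. } nra. }
    nra.
Qed.

Definition Phi (r x : R) := r * ln (sin x / x) - ln ((2 + Rpower (cos x) r) / 3).
Definition Phi' (r x : R) := r * (Rpower (cos x) r * Ex x - 2 * cos x * Dx x) / (x * sin x * cos x * (2 + Rpower (cos x) r)).

Lemma sc1 x : sin x ^ 2 + cos x ^ 2 = 1.
Proof. pose proof (sin2_cos2 x). unfold Rsqr in H. nra. Qed.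

Lemma Phi_deriv r x : 0 < x < PI / 2 -> derivable_pt_lim (Phi r) x (Phi' r x).
Proof.
  intros Hx. destruct (trig_basic x Hx) as [Hs [Hsx [Hc Hc1]]].
  apply is_derive_Reals. unfold Phi, Phi', Rpower.
  assert (0 < exp (r * ln (cos x))) by apply exp_pos.
  auto_derive; repeat split; try lra.
  - apply Rmult_lt_0_compat; [lra| apply Rinv_0_lt_compat; lra].
  - unfold Ex, Dx. pose proof (sc1 x).
    replace (x - sin x * cos x) with (x * (sin x ^ 2 + cos x ^ 2) - sin x * cos x) by (rewrite H0; ring).
    field. repeat split; lra.
Qed.

Lemma Phi'_sign r x : 0 < r -> 0 < x < PI / 2 ->
  (0 < Phi' r x <-> 2 * cos x * Dx x < Rpower (cos x) r * Ex x) /\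
  (Phi' r x < 0 <-> Rpower (cos x) r * Ex x < 2 * cos x * Dx x).
Proof.
  intros Hr Hx. destruct (trig_basic x Hx) as [Hs [Hsx [Hc Hc1]]]. pose proof (rpow_pos (cos x) r).
  assert (Hden : 0 < x * sin x * cos x * (2 + Rpower (cos x) r)).
  { repeat apply Rmult_lt_0_compat; lra. }
  assert (E : Phi' r x = (r / (x * sin x * cos x * (2 + Rpower (cos x) r))) * (Rpower (cos x) r * Ex x - 2 * cos x * Dx x))
    by (unfold Phi'; field; lra).
  assert (Hk : 0 < r / (x * sin x * cos x * (2 + Rpower (cos x) r))) by (apply Rdiv_lt_0_compat; lra).
  rewrite E. set (k := r / (x * sin x * cos x * (2 + Rpower (cos x) r))) in *.
  set (N := Rpower (cos x) r * Ex x - 2 * cos x * Dx x).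
  split; split; intros H1; unfold N in *; nra.
Qed.

Lemma mvt_up f f' x y : x < y -> (forall c, x <= c <= y -> derivable_pt_lim f c (f' c)) ->
  (forall c, x < c < y -> 0 < f' c) -> f x < f y.
Proof. intros Hxy Hd Hp. destruct (MVT_cor2 f f' x y Hxy Hd) as [c [E Hc]]. specialize (Hp c Hc). nra. Qed.
Lemma mvt_down f f' x y : x < y -> (forall c, x <= c <= y -> derivable_pt_lim f c (f' c)) ->
  (forall c, x < c < y -> f' c < 0) -> f y < f x.
Proof. intros Hxy Hd Hp. destruct (MVT_cor2 f f' x y Hxy Hd) as [c [E Hc]]. specialize (Hp c Hc). nra. Qed.

Lemma small_eps eta y : 0 < eta -> 0 < y -> exists e, 0 < e < y /\ e < 1 /\ e ^ 2 < eta.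
Proof.
  intros He Hy. exists (Rmin y (Rmin eta 1) / 2).
  pose proof (Rmin_l y (Rmin eta 1)). pose proof (Rmin_r y (Rmin eta 1)).
  pose proof (Rmin_l eta 1). pose proof (Rmin_r eta 1).
  assert (0 < Rmin y (Rmin eta 1)) by (apply Rmin_glb_lt; [lra| apply Rmin_glb_lt; lra]).
  set (m := Rmin y (Rmin eta 1)) in *. repeat split; try lra. nra.
Qed.

Lemma pos_from_incr (f : R -> R) x : 0 < x ->
  (forall u v, 0 < u -> u < v -> v <= x -> f u < f v) ->
  (forall d y, 0 < d -> 0 < y -> exists e, 0 < e < y /\ - d < f e) -> 0 < f x.
Proof.
  intros Hx Hi Hl. assert (f (x/2) < f x) by (apply Hi; lra).
  destruct (Rle_dec 0 (f (x/2))) as [|Hn]; [lra|].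
  destruct (Hl (- f (x/2)) (x/2) ltac:(lra) ltac:(lra)) as [e [He1 He2]].
  assert (f e < f (x/2)) by (apply Hi; lra). lra.
Qed.
Lemma neg_from_decr (f : R -> R) x : 0 < x ->
  (forall u v, 0 < u -> u < v -> v <= x -> f v < f u) ->
  (forall d y, 0 < d -> 0 < y -> exists e, 0 < e < y /\ f e < d) -> f x < 0.
Proof.
  intros Hx Hi Hl. assert (f x < f (x/2)) by (apply Hi; lra).
  destruct (Rle_dec (f (x/2)) 0) as [|Hn]; [lra|].
  destruct (Hl (f (x/2)) (x/2) ltac:(lra) ltac:(lra)) as [e [He1 He2]].
  assert (f (x/2) < f e) by (apply Hi; lra). lra.
Qed.
Lemma neg_from_incr_right (f : R -> R) x b : x < b ->
  (forall u v, x <= u -> u < v -> v < b -> f u < f v) ->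
  (forall d z, 0 < d -> z < b -> exists y, z < y < b /\ f y < d) -> f x < 0.
Proof.
  intros Hx Hi Hl. set (x' := (x + b) / 2). assert (f x < f x') by (apply Hi; unfold x'; lra).
  destruct (Rle_dec (f x') 0) as [|Hn]; [lra|].
  destruct (Hl (f x') x' ltac:(lra) ltac:(unfold x'; lra)) as [y [Hy1 Hy2]].
  assert (f x' < f y) by (apply Hi; unfold x' in *; lra). lra.
Qed.

Definition Psi x := ln (Ex x) - ln (2 * Dx x) - / 5 * ln (cos x).
Lemma Psi_deriv x : 0 < x < PI / 2 -> derivable_pt_lim Psi x (sin x * Nf x / (5 * cos x * Dx x * Ex x)).
Proof.
  intros Hx. destruct (trig_basic x Hx) as [Hs [Hsx [Hc Hc1]]].
  pose proof (T3D x Hx). pose proof (T3E x Hx).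
  assert (Et : sin x * Nf x / (5 * cos x * Dx x * Ex x) =
     (1 - cos x ^ 2 + sin x ^ 2) / Ex x - x * sin x / Dx x + / 5 * (sin x / cos x)).
  { replace (1 - cos x ^ 2 + sin x ^ 2) with (2 * sin x ^ 2) by (pose proof (sc1 x); lra).
    unfold Nf. field. repeat split; lra. }
  rewrite Et. apply is_derive_Reals. unfold Psi. unfold Ex, Dx in *.
  auto_derive; repeat split; try lra.
  field. repeat split; lra.
Qed.

Lemma Psi_pos x : 0 < x < PI / 2 -> 0 < Psi x.
Proof.
  intros Hx. pose proof PI2_3_2. apply (pos_from_incr Psi x); [lra| |].
  - intros u v Hu Huv Hv. apply (mvt_up Psi (fun c => sin c * Nf c / (5 * cos c * Dx c * Ex c))); auto.
    + intros c Hc. apply Psi_deriv; lra.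
    + intros c Hc. assert (Hc' : 0 < c < PI/2) by lra. destruct (trig_basic c Hc') as [? [? [? ?]]].
      pose proof (T1 c Hc'). pose proof (T3D c Hc'). pose proof (T3E c Hc').
      apply Rdiv_lt_0_compat; [apply Rmult_lt_0_compat; lra| repeat apply Rmult_lt_0_compat; lra].
  - intros d y Hd Hy.
    destruct (small_eps (2 * d / (1 + d)) (Rmin y 1)) as [e [He1 [He2 He3]]].
    { apply Rdiv_lt_0_compat; lra. } { apply Rmin_glb_lt; lra. }
    pose proof (Rmin_l y 1). pose proof (Rmin_r y 1).
    exists e; split; [lra|]. assert (He : 0 < e < PI/2) by lra.
    destruct (trig_basic e He) as [Hs [Hsx [Hc Hc1]]].
    pose proof (T2 e He). pose proof (T3D e He). pose proof (T3E e He).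
    assert (ln (2 * Dx e) + ln (cos e) <= ln (Ex e)).
    { rewrite <- ln_mult by lra. apply ln_le_mono; [apply Rmult_lt_0_compat; lra| lra]. }
    pose proof (ln_ge_1inv (cos e) Hc). pose proof (cos_lb2 e ltac:(lra)).
    assert (/ cos e < 1 + d).
    { assert (1 / (1 + d) < cos e).
      { assert (e ^ 2 / 2 < d / (1 + d)) by (unfold Rdiv in *; lra).
        assert (1 / (1 + d) = 1 - d / (1 + d)) by (field; lra). lra. }
      apply (Rmult_lt_reg_r (cos e)); auto. rewrite Rinv_l by lra.
      apply (Rmult_lt_reg_r (/ (1 + d))); [apply Rinv_0_lt_compat; lra|].
      replace ((1 + d) * cos e * / (1 + d)) with (cos e) by (field; lra). lra. }
    unfold Psi. lra.
Qed.

Lemma key45 x : 0 < x < PI / 2 -> 2 * cos x * Dx x < Rpower (cos x) (4/5) * Ex x.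
Proof.
  intros Hx. destruct (trig_basic x Hx) as [Hs [Hsx [Hc Hc1]]].
  pose proof (T3D x Hx). pose proof (T3E x Hx). pose proof (Psi_pos x Hx). unfold Psi in H1.
  assert (2 * Dx x * Rpower (cos x) (1/5) < Ex x).
  { rewrite <- (exp_ln (Ex x)) by lra. rewrite <- (exp_ln (2 * Dx x)) by lra. unfold Rpower.
    rewrite <- exp_plus. apply exp_increasing. lra. }
  assert (Rpower (cos x) (4/5) * Rpower (cos x) (1/5) = cos x).
  { rewrite <- Rpower_plus. replace (4/5 + 1/5) with 1 by field. apply Rpower_1; lra. }
  pose proof (rpow_pos (cos x) (4/5)). nra.
Qed.

Lemma PhiA a x : 0 < a <= 4/5 -> 0 < x < PI / 2 -> 0 < Phi a x.
Proof.
  intros Ha Hx. pose proof PI2_3_2. apply (pos_from_incr (Phi a) x); [lra| |].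
  - intros u v Hu Huv Hv. apply (mvt_up (Phi a) (Phi' a)); auto.
    + intros c Hc. apply Phi_deriv; lra.
    + intros c Hc. assert (Hc' : 0 < c < PI/2) by lra. destruct (trig_basic c Hc') as [? [? [? ?]]].
      apply (Phi'_sign a c ltac:(lra) Hc'). pose proof (key45 c Hc'). pose proof (T3E c Hc').
      pose proof (rpow_dec (cos c) a (4/5) ltac:(lra) ltac:(lra)). nra.
  - intros d y Hd Hy.
    destruct (small_eps (Rmin (3 * d / a) 1) (Rmin y 1)) as [e [He1 [He2 He3]]].
    { apply Rmin_glb_lt; [apply Rdiv_lt_0_compat; lra| lra]. } { apply Rmin_glb_lt; lra. }
    pose proof (Rmin_l y 1). pose proof (Rmin_r y 1). pose proof (Rmin_l (3 * d / a) 1). pose proof (Rmin_r (3 * d / a) 1).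
    exists e; split; [lra|]. assert (He : 0 < e < PI/2) by lra.
    destruct (trig_basic e He) as [Hs [Hsx [Hc Hc1]]].
    pose proof (sin_lb3 e ltac:(lra)).
    assert (Hln0 : ln ((2 + Rpower (cos e) a) / 3) <= 0).
    { rewrite <- ln_1. apply ln_le_mono; [pose proof (rpow_pos (cos e) a); lra|].
      pose proof (rpow_lt1 (cos e) a ltac:(lra) ltac:(lra)). lra. }
    assert (Hsp : 0 < sin e / e) by (apply Rdiv_lt_0_compat; lra).
    pose proof (ln_ge_1inv _ Hsp).
    assert (/ (sin e / e) <= 1 + e ^ 2 / 3).
    { rewrite Rinv_div. apply (Rmult_le_reg_r (sin e)); auto. unfold Rdiv. rewrite Rmult_assoc, Rinv_l by lra.
      assert (e ^ 3 = e * e ^ 2) by ring. assert (e ^ 2 < 1) by nra. nra. }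
    assert (He4 : e ^ 2 < 3 * d / a) by lra.
    assert (a * (e ^ 2 / 3) < d). { apply (Rmult_lt_compat_l a) in He4; [|lra].
      replace (a * (3 * d / a)) with (3 * d) in He4 by (field; lra). lra. }
    unfold Phi. nra.
Qed.

Definition pc := (ln 3 - ln 2) / (ln PI - ln 2).
Lemma lnpi2_pos : 0 < ln PI - ln 2.
Proof. pose proof PI2_3_2. assert (ln 2 < ln PI) by (apply ln_increasing; lra). lra. Qed.
Lemma pc_eq : pc * (ln PI - ln 2) = ln 3 - ln 2.
Proof. unfold pc. pose proof lnpi2_pos. field. lra. Qed.
Lemma ln_div a b : 0 < a -> 0 < b -> ln (a / b) = ln a - ln b.
Proof. intros. unfold Rdiv. rewrite ln_mult by (auto; apply Rinv_0_lt_compat; auto). rewrite ln_Rinv by auto. ring. Qed.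
Lemma pc_bounds : 35/39 < pc < 53/59.
Proof.
  pose proof PI2_lb as H1. pose proof PI2_ub as H2. rewrite Bqv in H1. pose proof lnpi2_pos.
  assert (Hl : ln PI - ln 2 = ln (PI / 2)) by (rewrite ln_div; lra).
  assert (Hl3 : ln 3 - ln 2 = ln (3 / 2)) by (rewrite ln_div; lra).
  assert (Hr : ln 3 - ln 2 = pc * (ln PI - ln 2)) by (rewrite pc_eq; auto).
  split.
  - assert (35 * ln (PI / 2) < 39 * ln (3/2)).
    { replace 35 with (INR 35) by (simpl; lra). replace 39 with (INR 39) by (simpl; lra).
      rewrite <- !ln_pow by lra. apply ln_increasing; [apply pow_lt; lra|].
      apply Rle_lt_trans with ((15709/10000)^35); [apply pow_incr; lra| lra]. }
    rewrite <- Hl, <- Hl3, Hr in H0. nra.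
  - assert (59 * ln (3/2) < 53 * ln (PI / 2)).
    { replace 59 with (INR 59) by (simpl; lra). replace 53 with (INR 53) by (simpl; lra).
      rewrite <- !ln_pow by lra. apply ln_increasing; [apply pow_lt; lra|].
      apply Rlt_le_trans with ((15707/10000)^53); [lra| apply pow_incr; lra]. }
    rewrite <- Hl, <- Hl3, Hr in H0. nra.
Qed.

Lemma pow_strict a b (m : nat) : 0 <= a < b -> (0 < m)%nat -> a ^ m < b ^ m.
Proof.
  intros Hab Hm. destruct m as [|m]; [lia|]. clear Hm. induction m as [|m IH]; [simpl; lra|].
  change (a ^ S (S m)) with (a * a ^ S m). change (b ^ S (S m)) with (b * b ^ S m).
  pose proof (pow_le a (S m) (proj1 Hab)). apply Rmult_le_0_lt_compat; lra.
Qed.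
Lemma rpow_rat_le w A (n m : nat) : 0 < w -> 0 < A -> (0 < m)%nat -> w ^ n <= A ^ m -> Rpower w (INR n / INR m) <= A.
Proof.
  intros Hw HA Hm H. destruct (Rle_dec (Rpower w (INR n / INR m)) A) as [|Hn]; auto.
  assert (A ^ m < Rpower w (INR n / INR m) ^ m) by (apply pow_strict; [lra| lia]).
  assert (E : Rpower w (INR n / INR m) ^ m = w ^ n).
  { rewrite <- (Rpower_pow m (Rpower w (INR n / INR m))) by apply rpow_pos. rewrite Rpower_mult.
    replace (INR n / INR m * INR m) with (INR n) by (field; apply not_0_INR; lia).
    apply Rpower_pow; auto. }
  lra.
Qed.

Lemma cp_lower c g G : 0 < c < g -> g < 1 -> Rpower g (6/59) <= G ->
  0 < G * (1 + 6/59 * (c * / g - 1)) /\ c / (G * (1 + 6/59 * (c * / g - 1))) <= Rpower c pc.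
Proof.
  intros Hc Hg HG. pose proof pc_bounds. pose proof (rpow_pos g (6/59)).
  assert (Hcg : 0 < c * / g < 1). { split; [apply Rmult_lt_0_compat; [lra| apply Rinv_0_lt_compat; lra]|].
    apply (Rmult_lt_reg_r g); [lra|]. rewrite Rmult_assoc, Rinv_l by lra. lra. }
  assert (HL : 0 < G * (1 + 6/59 * (c * / g - 1))) by (apply Rmult_lt_0_compat; nra).
  split; auto.
  assert (E1 : Rpower g (1 - pc) * Rpower (c * / g) (1 - pc) = Rpower c (1 - pc)).
  { rewrite Rpower_mult_distr by lra. f_equal. field. lra. }
  assert (B1 : Rpower g (1 - pc) <= G) by (apply Rle_trans with (Rpower g (6/59)); auto; apply rpow_dec; lra).
  assert (B2 : Rpower (c * / g) (1 - pc) <= 1 + 6/59 * (c * / g - 1)).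
  { apply Rle_trans with (1 + (1 - pc) * (c * / g - 1)); [apply bern; lra| nra]. }
  pose proof (rpow_pos g (1 - pc)). pose proof (rpow_pos (c * / g) (1 - pc)).
  assert (B3 : Rpower c (1 - pc) <= G * (1 + 6/59 * (c * / g - 1))) by (rewrite <- E1; apply Rmult_le_compat; lra).
  assert (E2 : Rpower c pc * Rpower c (1 - pc) = c) by (rewrite <- Rpower_plus; replace (pc + (1 - pc)) with 1 by ring; apply Rpower_1; lra).
  pose proof (rpow_pos c pc). pose proof (rpow_pos c (1 - pc)).
  apply (Rmult_le_reg_r (G * (1 + 6/59 * (c * / g - 1)))); auto.
  unfold Rdiv. rewrite Rmult_assoc, Rinv_l by lra. nra.
Qed.

Lemma sp_upper s w A : 0 < s <= w -> w < 1 -> Rpower w (35/39) <= A ->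
  Rpower s pc <= A * (1 + 35/39 * (s * / w - 1)).
Proof.
  intros Hs Hw HA. pose proof pc_bounds.
  assert (Hsw : 0 < s * / w <= 1). { split; [apply Rmult_lt_0_compat; [lra| apply Rinv_0_lt_compat; lra]|].
    apply (Rmult_le_reg_r w); [lra|]. rewrite Rmult_assoc, Rinv_l by lra. lra. }
  assert (E1 : Rpower w pc * Rpower (s * / w) pc = Rpower s pc).
  { rewrite Rpower_mult_distr by lra. f_equal. field. lra. }
  assert (B1 : Rpower w pc <= A) by (apply Rle_trans with (Rpower w (35/39)); auto; apply rpow_dec; lra).
  assert (B2 : Rpower (s * / w) pc <= 1 + 35/39 * (s * / w - 1)).
  { apply Rle_trans with (1 + pc * (s * / w - 1)); [apply bern; lra| nra]. }
  pose proof (rpow_pos w pc). pose proof (rpow_pos (s * / w) pc).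
  rewrite <- E1. apply Rmult_le_compat; lra.
Qed.

Lemma neg_ln_le z : 0 < z -> - ln z <= / z - 1.
Proof. intros. pose proof (ln_ge_1inv z H). lra. Qed.

Lemma PhiP_R1 x : 0 < x <= 21/20 -> Phi pc x < 0.
Proof.
  intros Hx. pose proof PI2_3_2. pose proof pc_bounds. apply (neg_from_decr (Phi pc) x); [lra| |].
  - intros u v Hu Huv Hv. apply (mvt_down (Phi pc) (Phi' pc)); auto.
    + intros c Hc. apply Phi_deriv; lra.
    + intros c Hc. assert (Hc' : 0 < c < PI/2) by lra. destruct (trig_basic c Hc') as [? [? [? ?]]].
      apply (Phi'_sign pc c ltac:(lra) Hc'). pose proof (T4 c ltac:(lra)). pose proof (T3E c Hc').
      pose proof (bern pc (cos c) ltac:(lra) ltac:(lra)).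
      assert (Rpower (cos c) pc <= 1 + 35/39 * (cos c - 1)) by nra. nra.
  - intros d y Hd Hy.
    destruct (small_eps d (Rmin y 1)) as [e [He1 [He2 He3]]]; auto. { apply Rmin_glb_lt; lra. }
    pose proof (Rmin_l y 1). pose proof (Rmin_r y 1).
    exists e; split; [lra|]. assert (He : 0 < e < PI/2) by lra.
    destruct (trig_basic e He) as [Hs [Hsx [Hc Hc1]]].
    assert (Hs1 : ln (sin e / e) < 0). { apply ln_lt_0'. split; [apply Rdiv_lt_0_compat; lra|].
      apply (Rmult_lt_reg_r e); [lra|]. unfold Rdiv; rewrite Rmult_assoc, Rinv_l; lra. }
    assert (Hcp : cos e <= Rpower (cos e) pc). { rewrite <- (rpow_1 (cos e)) at 1 by lra. apply rpow_dec; lra. }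
    assert (- ln ((2 + Rpower (cos e) pc) / 3) <= - ln ((2 + cos e) / 3)).
    { apply Ropp_le_contravar. apply ln_le_mono; lra. }
    pose proof (neg_ln_le ((2 + cos e) / 3) ltac:(lra)).
    assert (/ ((2 + cos e) / 3) - 1 <= 1 - cos e).
    { replace (/ ((2 + cos e) / 3) - 1) with ((1 - cos e) / (2 + cos e)) by (field; lra).
      apply (Rmult_le_reg_r (2 + cos e)); [lra|]. unfold Rdiv; rewrite Rmult_assoc, Rinv_l by lra. nra. }
    pose proof (cos_lb2 e ltac:(lra)).
    unfold Phi. nra.
Qed.

Lemma mid_gen w g A G x : 0 < x < PI / 2 -> 0 < w < 1 -> 0 < g < 1 ->
  Rpower w (35/39) <= A -> Rpower g (6/59) <= G ->
  0 < fmid w g A G x -> 0 < w * x - sin x -> 0 < g - cos x -> Phi pc x < 0.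
Proof.
  intros Hx Hw Hg HA HG Hf Hsw Hcg. destruct (trig_basic x Hx) as [Hs [Hsx [Hc Hc1]]]. pose proof pc_bounds.
  set (s := sin x / x).
  assert (Hs0 : 0 < s) by (apply Rdiv_lt_0_compat; lra).
  assert (Hsw' : s <= w). { unfold s. apply (Rmult_le_reg_r x); [lra|]. unfold Rdiv; rewrite Rmult_assoc, Rinv_l; lra. }
  pose proof (sp_upper s w A (conj Hs0 Hsw') ltac:(lra) HA) as HU.
  destruct (cp_lower (cos x) g G ltac:(lra) ltac:(lra) HG) as [HL HCL].
  set (L := G * (1 + 6 / 59 * (cos x * / g - 1))) in *.
  set (U := A * (1 + 35 / 39 * (s * / w - 1))) in *.
  assert (EF : fmid w g A G x = x * (cos x - (3 * U - 2) * L)).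
  { unfold fmid, U, L, s. field. lra. }
  rewrite EF in Hf.
  assert (H1 : (3 * U - 2) * L < cos x) by nra.
  assert (H2 : 3 * U - 2 < cos x / L).
  { apply (Rmult_lt_reg_r L); auto. unfold Rdiv; rewrite Rmult_assoc, Rinv_l by lra. lra. }
  assert (H3 : Rpower s pc < (2 + Rpower (cos x) pc) / 3) by lra.
  unfold Phi. fold s. rewrite <- ln_Rpower. pose proof (rpow_pos s pc).
  assert (ln (Rpower s pc) < ln ((2 + Rpower (cos x) pc) / 3)) by (apply ln_increasing; lra). lra.
Qed.

Lemma mid_use a b w g A G : midP a b w g A G -> 0 < Q2R w < 1 -> 0 < Q2R g < 1 ->
  Q2R w ^ 35 <= Q2R A ^ 39 -> Q2R g ^ 6 <= Q2R G ^ 59 -> 0 < Q2R A -> 0 < Q2R G ->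
  forall x, 0 < Q2R a -> Q2R a < x <= Q2R b -> x < PI / 2 -> Phi pc x < 0.
Proof.
  intros HM Hw Hg HwA HgG HA HG x Ha Hx Hx2. destruct (HM x Hx) as [H1 [H2 H3]].
  apply (mid_gen (Q2R w) (Q2R g) (Q2R A) (Q2R G)); auto; try lra.
  - replace (35/39) with (INR 35 / INR 39) by (simpl; field). apply rpow_rat_le; [lra|lra|lia|lra].
  - replace (6/59) with (INR 6 / INR 59) by (simpl; field). apply rpow_rat_le; [lra|lra|lia|lra].
Qed.

Ltac mid_side := unfold Q2R; simpl; lra.

Lemma PhiP_R2 x : 105/100 < x <= 145/100 -> Phi pc x < 0.
Proof.
  intros Hx. pose proof PI2_lb. rewrite Bqv in H.
  destruct (Rle_dec x (115/100)).
  { apply (mid_use _ _ _ _ _ _ Mid1); try mid_side. }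
  destruct (Rle_dec x (125/100)).
  { apply (mid_use _ _ _ _ _ _ Mid2); try mid_side. }
  destruct (Rle_dec x (135/100)).
  { apply (mid_use _ _ _ _ _ _ Mid3); try mid_side. }
  { apply (mid_use _ _ _ _ _ _ Mid4); try mid_side. }
Qed.

Lemma PhiP_R3 x : 145/100 < x < PI / 2 -> Phi pc x < 0.
Proof.
  intros Hx. pose proof pc_bounds. pose proof PI2_3_2.
  assert (HgG : Rpower (603/5000) (6/59) <= 1613/2000).
  { replace (6/59) with (INR 6 / INR 59) by (simpl; field). apply rpow_rat_le; [lra|lra|lia|lra]. }
  apply (neg_from_incr_right (Phi pc) x (PI/2)); [lra| |].
  - intros u v Hu Huv Hv. apply (mvt_up (Phi pc) (Phi' pc)); auto.
    + intros c Hc. apply Phi_deriv; lra.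
    + intros c Hc. assert (Hc' : 0 < c < PI/2) by lra. destruct (trig_basic c Hc') as [? [? [? ?]]].
      apply (Phi'_sign pc c ltac:(lra) Hc'). destruct (T5 c ltac:(lra)) as [H5 H6].
      pose proof (T3E c Hc'). pose proof (T3D c Hc').
      destruct (cp_lower (cos c) (603/5000) (1613/2000) ltac:(lra) ltac:(lra) HgG) as [HL HCL].
      set (L := 1613 / 2000 * (1 + 6 / 59 * (cos c * / (603 / 5000) - 1))) in *.
      assert (2 * Dx c * L < Ex c) by lra.
      assert (2 * cos c * Dx c < cos c / L * Ex c).
      { apply (Rmult_lt_reg_r L); auto. replace (cos c / L * Ex c * L) with (cos c * Ex c) by (field; lra). nra. }
      nra.
  - intros d z Hd Hz.
    set (y0 := Rmax z ((PI/2) / (1 + d))).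
    assert (Hy0 : 0 < (PI/2) / (1 + d)) by (apply Rdiv_lt_0_compat; lra).
    assert (Hy0' : (PI/2) / (1 + d) < PI/2).
    { apply (Rmult_lt_reg_r (1 + d)); [lra|]. unfold Rdiv; rewrite Rmult_assoc, Rinv_l by lra. nra. }
    pose proof (Rmax_l z ((PI/2) / (1 + d))). pose proof (Rmax_r z ((PI/2) / (1 + d))).
    assert (y0 < PI/2) by (unfold y0; apply Rmax_lub_lt; lra).
    exists ((y0 + PI/2)/2). set (y := (y0 + PI/2)/2). split; [unfold y, y0 in *; lra|].
    assert (Hy : 0 < y < PI/2) by (unfold y, y0 in *; lra).
    destruct (trig_basic y Hy) as [Hs [Hsx [Hc Hc1]]]. pose proof (SIN_bound y).
    assert (A1 : - ln ((2 + Rpower (cos y) pc) / 3) <= - ln (2/3)).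
    { apply Ropp_le_contravar, ln_le_mono; [lra|]. pose proof (rpow_pos (cos y) pc). lra. }
    assert (A2 : ln (sin y / y) <= ln (/ y)).
    { apply ln_le_mono; [apply Rdiv_lt_0_compat; lra|]. unfold Rdiv. rewrite <- (Rmult_1_l (/ y)) at 2.
      apply Rmult_le_compat_r; [left; apply Rinv_0_lt_compat; lra| lra]. }
    rewrite ln_Rinv in A2 by lra.
    assert (E : - ln (2/3) = pc * (ln PI - ln 2)) by (rewrite pc_eq, ln_div; lra).
    assert (E2 : ln PI - ln 2 - ln y = ln (PI / (2 * y))).
    { rewrite ln_div by lra. rewrite ln_mult by lra. ring. }
    pose proof (ln_le_sub1 (PI / (2 * y)) ltac:(apply Rdiv_lt_0_compat; lra)).
    assert (Hb : PI / (2 * y) - 1 < d).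
    { assert (Hyy : (PI/2) / (1 + d) < y) by (unfold y, y0 in *; lra).
      assert (Hyy2 : PI/2 < y * (1 + d)).
      { replace (PI/2) with ((PI/2)/(1+d) * (1+d)) by (field; lra). apply Rmult_lt_compat_r; lra. }
      apply (Rmult_lt_reg_r (2 * y)); [lra|]. replace ((PI / (2 * y) - 1) * (2 * y)) with (PI - 2 * y) by (field; lra). nra. }
    assert (0 <= ln (PI / (2 * y))).
    { rewrite <- ln_1. apply ln_le_mono; [lra|]. apply (Rmult_le_reg_r (2 * y)); [lra|].
      unfold Rdiv; rewrite Rmult_assoc, Rinv_l by lra. lra. }
    unfold Phi. nra.
Qed.

Lemma PhiP_neg x : 0 < x < PI / 2 -> Phi pc x < 0.
Proof.
  intros Hx. destruct (Rle_dec x (21/20)); [apply PhiP_R1; lra|].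
  destruct (Rle_dec x (145/100)); [apply PhiP_R2; lra| apply PhiP_R3; lra].
Qed.

Lemma exp_neg_le u : 0 <= u -> exp (- u) * (1 + u) <= 1.
Proof. intros Hu. pose proof (exp_ge1 u). pose proof (exp_pos u). rewrite exp_Ropp.
  apply (Rmult_le_reg_r (exp u)); auto. replace (/ exp u * (1 + u) * exp u) with (1 + u) by (field; lra). lra. Qed.

Lemma aux_qu d T : 0 < d -> 0 < T -> T <= d/2 -> T <= 1/4 -> 1 < (1 - 1/5 * (T * T)) * (1 + d * T / 3).
Proof.
  intros. assert (HdT : d * (T * T) <= d * (1/16)) by (apply Rmult_le_compat_l; nra).
  assert (Hin : 0 < d / 3 - T / 5 - d * (T * T) / 15) by lra.
  assert (EqT : (1 - 1/5 * (T * T)) * (1 + d * T / 3) = 1 + T * (d / 3 - T / 5 - d * (T * T) / 15)) by field.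
  rewrite EqT. assert (0 < T * (d / 3 - T / 5 - d * (T * T) / 15)) by (apply Rmult_lt_0_compat; lra). lra.
Qed.

Lemma PhiC a : 4/5 < a -> exists x, 0 < x < PI / 2 /\ Phi a x < 0.
Proof.
  intros Ha. pose proof PI2_3_2.
  set (a' := Rmin a 1). set (d := a' - 4/5).
  assert (Hd : 0 < d <= 1/5) by (unfold d, a'; pose proof (Rmin_l a 1); pose proof (Rmin_r a 1);
     destruct (Rle_dec a 1); [rewrite Rmin_left| rewrite Rmin_right]; lra).
  set (xs := Rmin (1/2) d).
  assert (Hxs : 0 < xs <= 1/2 /\ xs <= d) by (unfold xs; pose proof (Rmin_l (1/2) d); pose proof (Rmin_r (1/2) d);
     split; [split; [apply Rmin_glb_lt; lra| lra]| lra]).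
  exists xs. split; [lra|].
  apply (neg_from_decr (Phi a) xs); [lra| |].
  - intros u v Hu Huv Hv. apply (mvt_down (Phi a) (Phi' a)); auto.
    + intros c Hc. apply Phi_deriv; lra.
    + intros t Ht. assert (Ht' : 0 < t < PI/2) by lra. destruct (trig_basic t Ht') as [Hs [Hsx [Hc Hc1]]].
      apply (Phi'_sign a t ltac:(lra) Ht').
      pose proof (T6 t ltac:(lra)) as H6. pose proof (T3E t Ht'). pose proof (T3D t Ht').
      set (C := cos t) in *. set (E := Ex t) in *. set (D := Dx t) in *.
      set (q := 1 - 1/5 * t ^ 4) in *.
      assert (Hq : 0 < q <= 1). { unfold q. assert (t ^ 4 <= 1/16). { replace (t^4) with ((t^2)^2) by ring.
          assert (t^2 <= 1/4) by nra. nra. } assert (0 <= t^4) by (apply pow_le; lra). lra. }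
      set (K := Rpower C (4/5) * E * q).
      assert (HK0 : 0 < K) by (unfold K; pose proof (rpow_pos C (4/5)); repeat apply Rmult_lt_0_compat; lra).
      assert (Hc45 : Rpower C (4/5) ^ 5 = C ^ 4).
      { rewrite <- (Rpower_pow 5 (Rpower C (4/5))) by apply rpow_pos. rewrite Rpower_mult.
        replace (4/5 * INR 5) with (INR 4) by (simpl; field). apply Rpower_pow; lra. }
      assert (HK : K < 2 * C * D).
      { destruct (Rlt_le_dec K (2 * C * D)) as [|Hn]; auto. exfalso.
        assert (Hq5 : q ^ 5 <= q). { replace (q^5) with (q * q^4) by ring.
          pose proof (pow_incr q 1 4 ltac:(lra)) as Hq4. rewrite pow1 in Hq4.
          assert (0 <= q^4) by (apply pow_le; lra). nra. }
        assert (HK5 : K ^ 5 <= C ^ 4 * E ^ 5 * q).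
        { unfold K. rewrite !Rpow_mult_distr, Hc45.
          assert (0 <= C ^ 4 * E ^ 5) by (apply Rmult_le_pos; apply pow_le; lra). nra. }
        assert (HKC : (2 * C * D) ^ 5 <= K ^ 5) by (apply pow_incr; split; [repeat apply Rmult_le_pos; lra| lra]).
        assert (E ^ 5 * q < 32 * C * D ^ 5) by lra.
        assert (C ^ 4 * (E ^ 5 * q) < C ^ 4 * (32 * C * D ^ 5)) by (apply Rmult_lt_compat_l; [apply pow_lt; lra| lra]).
        assert ((2 * C * D) ^ 5 = C ^ 4 * (32 * C * D ^ 5)) by ring.
        nra. }
      assert (Ha' : 4/5 + d <= a) by (unfold d, a'; pose proof (Rmin_l a 1); lra).
      assert (Hca : Rpower C a <= Rpower C (4/5) * Rpower C d).
      { rewrite <- Rpower_plus. apply rpow_dec; lra. }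
      assert (HC3 : C <= 1 - t^2/3).
      { pose proof (cos_ub4 t ltac:(lra)). fold C in H2. assert (t^4 <= t^2/2) by (replace (t^4) with (t^2*t^2) by ring; assert (t^2 <= 1/4) by nra; assert (0 <= t^2) by nra; nra). lra. }
      set (uu := d * t^2 / 3).
      assert (Huu : 0 <= uu) by (unfold uu; assert (0 <= t^2) by nra; nra).
      assert (Hcd : Rpower C d <= exp (- uu)).
      { unfold Rpower. apply exp_le_mono. pose proof (ln_le_sub1 C Hc). unfold uu. nra. }
      pose proof (exp_neg_le uu Huu).
      assert (Hqu : 1 < q * (1 + uu)).
      { unfold q, uu. assert (Htd : t <= d) by lra. assert (HT1 : t^2 <= d/2) by nra.
        assert (HT0 : 0 < t^2) by nra. assert (HT4 : t^4 = t^2 * t^2) by ring. assert (HT2 : t^2 <= 1/4) by nra.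
        rewrite HT4. apply aux_qu; lra. }
      assert (Hcdq : Rpower C d < q).
      { apply Rle_lt_trans with (exp (- uu)); auto. pose proof (exp_pos (- uu)). nra. }
      pose proof (rpow_pos C (4/5)). pose proof (rpow_pos C d).
      assert (Rpower C a * E <= Rpower C (4/5) * Rpower C d * E) by (apply Rmult_le_compat_r; lra).
      assert (HPE : 0 < Rpower C (4/5) * E) by (apply Rmult_lt_0_compat; lra).
      assert (Rpower C (4/5) * Rpower C d * E < K).
      { unfold K. replace (Rpower C (4/5) * Rpower C d * E) with ((Rpower C (4/5) * E) * Rpower C d) by ring.
        replace (Rpower C (4/5) * E * q) with ((Rpower C (4/5) * E) * q) by ring. apply Rmult_lt_compat_l; auto. }
      lra.
  - intros dl y Hdl Hy.
    destruct (small_eps (dl / a) (Rmin y 1)) as [e [He1 [He2 He3]]]; [apply Rdiv_lt_0_compat; lra| apply Rmin_glb_lt; lra|].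
    pose proof (Rmin_l y 1). pose proof (Rmin_r y 1).
    exists e; split; [lra|]. assert (He : 0 < e < PI/2) by lra.
    destruct (trig_basic e He) as [Hs [Hsx [Hc Hc1]]].
    assert (Hs1 : ln (sin e / e) < 0). { apply ln_lt_0'. split; [apply Rdiv_lt_0_compat; lra|].
      apply (Rmult_lt_reg_r e); [lra|]. unfold Rdiv; rewrite Rmult_assoc, Rinv_l; lra. }
    pose proof (rpow_pos (cos e) a). pose proof (rpow_lt1 (cos e) a ltac:(lra) ltac:(lra)).
    pose proof (neg_ln_le ((2 + Rpower (cos e) a) / 3) ltac:(lra)).
    assert (/ ((2 + Rpower (cos e) a) / 3) - 1 <= 1 - Rpower (cos e) a).
    { replace (/ ((2 + Rpower (cos e) a) / 3) - 1) with ((1 - Rpower (cos e) a) / (2 + Rpower (cos e) a)) by (field; lra).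
      apply (Rmult_le_reg_r (2 + Rpower (cos e) a)); [lra|]. unfold Rdiv; rewrite Rmult_assoc, Rinv_l by lra. nra. }
    assert (1 + a * ln (cos e) <= Rpower (cos e) a) by (unfold Rpower; apply exp_ge1).
    pose proof (ln_ge_1inv (cos e) Hc). pose proof (cos_lb2 e ltac:(lra)).
    assert (/ cos e - 1 <= e ^ 2).
    { replace (/ cos e - 1) with ((1 - cos e) / cos e) by (field; lra).
      apply (Rmult_le_reg_r (cos e)); [lra|]. unfold Rdiv; rewrite Rmult_assoc, Rinv_l by lra.
      assert (e^2 < 1) by nra. nra. }
    assert (a * e ^ 2 < dl). { apply (Rmult_lt_compat_l a) in He3; [|lra].
      replace (a * (dl / a)) with dl in He3 by (field; lra). lra. }
    unfold Phi. nra.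
Qed.

Definition PM (r c : R) := Rpower ((2 + Rpower c r) / 3) (1 / r).

Lemma M_lt_s r x : 0 < r -> 0 < x < PI / 2 -> 0 < Phi r x -> PM r (cos x) < sin x / x.
Proof.
  intros Hr Hx HP. destruct (trig_basic x Hx) as [Hs [Hsx [Hc Hc1]]].
  assert (Hsp : 0 < sin x / x) by (apply Rdiv_lt_0_compat; lra).
  unfold PM, Rpower at 1. rewrite <- (exp_ln (sin x / x)) at 1 by auto. apply exp_increasing.
  unfold Phi in HP. apply (Rmult_lt_reg_l r); auto. replace (r * (1 / r * ln ((2 + Rpower (cos x) r) / 3))) with (ln ((2 + Rpower (cos x) r) / 3)) by (field; lra). lra.
Qed.
Lemma s_lt_M r x : 0 < r -> 0 < x < PI / 2 -> Phi r x < 0 -> sin x / x < PM r (cos x).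
Proof.
  intros Hr Hx HP. destruct (trig_basic x Hx) as [Hs [Hsx [Hc Hc1]]].
  assert (Hsp : 0 < sin x / x) by (apply Rdiv_lt_0_compat; lra).
  unfold PM, Rpower at 1. rewrite <- (exp_ln (sin x / x)) at 1 by auto. apply exp_increasing.
  unfold Phi in HP. apply (Rmult_lt_reg_l r); auto. replace (r * (1 / r * ln ((2 + Rpower (cos x) r) / 3))) with (ln ((2 + Rpower (cos x) r) / 3)) by (field; lra). lra.
Qed.

Lemma J_lemma p b c : 0 < p <= b -> 0 < c < 1 -> PM p c <= PM b c.
Proof.
  intros Hp Hc. unfold PM.
  set (y := Rpower c b). set (t := p / b). set (m := (2 + y) / 3).
  assert (Hy : 0 < y) by apply rpow_pos. assert (Hm : 0 < m) by (unfold m; lra).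
  assert (Ecp : Rpower c p = Rpower y t) by (unfold y, t; rewrite Rpower_mult; f_equal; field; lra).
  rewrite Ecp. fold m.
  assert (Ht : 0 < t <= 1). { unfold t. split; [apply Rdiv_lt_0_compat; lra|].
    apply (Rmult_le_reg_r b); [lra|]. unfold Rdiv; rewrite Rmult_assoc, Rinv_l; lra. }
  assert (Hmain : (2 + Rpower y t) / 3 <= Rpower m t).
  { destruct (Req_dec t 1) as [E1|E1].
    - rewrite E1, !Rpower_1 by lra. unfold m; lra.
    - assert (E2 : Rpower m t * Rpower (/ m) t = 1) by (rewrite Rpower_mult_distr by (try apply Rinv_0_lt_compat; lra); rewrite Rinv_r by lra; apply rpow_one).
      assert (E3 : Rpower m t * Rpower (y / m) t = Rpower y t) by (rewrite Rpower_mult_distr by (try apply Rdiv_lt_0_compat; lra); f_equal; field; lra).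
      pose proof (bern t (/ m) ltac:(lra) ltac:(apply Rinv_0_lt_compat; lra)).
      pose proof (bern t (y / m) ltac:(lra) ltac:(apply Rdiv_lt_0_compat; lra)).
      pose proof (rpow_pos m t).
      assert (2 * (1 + t * (/ m - 1)) + (1 + t * (y / m - 1)) = 3).
      { unfold m. field. lra. }
      rewrite <- E3. replace 2 with (2 * (Rpower m t * Rpower (/ m) t)) at 1 by (rewrite E2; ring). nra. }
  assert (0 < (2 + Rpower y t) / 3) by (pose proof (rpow_pos y t); lra).
  apply Rle_trans with (Rpower (Rpower m t) (1 / p)).
  - apply Rle_Rpower_l; [left; apply Rdiv_lt_0_compat; lra| lra].
  - rewrite Rpower_mult. right. f_equal. unfold t. field. lra.
Qed.

Lemma amgm3 v : 0 < v -> v <= (2 + v ^ 3) / 3.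
Proof. intros. assert (0 <= (v - 1)^2 * (v + 2)) by (apply Rmult_le_pos; [apply pow2_ge_0| lra]).
  assert ((v - 1)^2 * (v + 2) = v^3 - 3 * v + 2) by ring. lra. Qed.

Lemma M_le_cube a c : a < 0 -> 0 < c < 1 -> PM a c <= Rpower c (1/3).
Proof.
  intros Ha Hc. unfold PM, Rpower at 1 2. apply exp_le_mono.
  set (v := Rpower c (a / 3)). assert (Hv : 0 < v) by apply rpow_pos.
  assert (Ev : v ^ 3 = Rpower c a).
  { unfold v. rewrite <- (Rpower_pow 3 (Rpower c (a/3))) by apply rpow_pos. rewrite Rpower_mult. f_equal. simpl; field. }
  assert (Hvam : v <= (2 + Rpower c a) / 3) by (rewrite <- Ev; apply amgm3; lra).
  assert (ln v <= ln ((2 + Rpower c a) / 3)) by (apply ln_le_mono; auto).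
  unfold v in H. rewrite ln_Rpower in H.
  assert (/ a < 0) by (apply Rinv_lt_0_compat; lra).
  replace (1 / 3 * ln c) with (1 / a * (a / 3 * ln c)) by (field; lra).
  change (exp (a * ln c)) with (Rpower c a). apply Rmult_le_compat_neg_l; [unfold Rdiv; lra| lra].
Qed.

Lemma cube_le_M45 c : 0 < c < 1 -> Rpower c (1/3) <= PM (4/5) c.
Proof.
  intros Hc. unfold PM, Rpower at 1 2. apply exp_le_mono.
  set (u := Rpower c (4/15)). assert (Hu : 0 < u) by apply rpow_pos.
  assert (Eu : u ^ 3 = Rpower c (4/5)).
  { unfold u. rewrite <- (Rpower_pow 3 (Rpower c (4/15))) by apply rpow_pos. rewrite Rpower_mult. f_equal. simpl; field. }
  assert (u <= (2 + Rpower c (4/5)) / 3) by (rewrite <- Eu; apply amgm3; lra).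
  assert (ln u <= ln ((2 + Rpower c (4/5)) / 3)) by (apply ln_le_mono; auto).
  unfold u in H0. rewrite ln_Rpower in H0.
  change (exp (4/5 * ln c)) with (Rpower c (4/5)). replace (1 / 3 * ln c) with (5/4 * (4/15 * ln c)) by field. replace (1 / (4/5)) with (5/4) by field. lra.
Qed.

End AnalM.
Import AnalM.
Open Scope R_scope.
Open Scope R_scope.

Lemma pm_ne r c : r <> 0 -> 0 < c -> power_mean r 1 c (2/3) = PM r c.
Proof.
  intros Hr Hc. unfold power_mean, PM. destruct (Req_EM_T r 0) as [E|E]; [contradiction|].
  rewrite rpow_one. f_equal. field.
Qed.
Lemma pm_0 c : 0 < c -> power_mean 0 1 c (2/3) = Rpower c (1/3).
Proof.
  intros Hc. unfold power_mean. destruct (Req_EM_T 0 0) as [E|E]; [|lra].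
  rewrite rpow_one, Rmult_1_l. f_equal. field.
Qed.

Lemma D_neg b : b <= 0 -> exists x, 0 < x < PI / 2 /\ power_mean b 1 (cos x) (2/3) < sin x / x.
Proof.
  intros Hb. pose proof PI2_3_2. exists (3/2). split; [lra|].
  assert (Hx : 0 < 3/2 < PI/2) by lra. destruct (trig_basic _ Hx) as [Hs [Hsx [Hc Hc1]]].
  pose proof (cos_ub4 (3/2) ltac:(lra)). pose proof (sin_lb3 (3/2) ltac:(lra)).
  assert (Hs2 : 1/2 < sin (3/2) / (3/2)).
  { replace (sin (3/2) / (3/2)) with (2/3 * sin (3/2)) by field. lra. }
  assert (Hc3 : Rpower (cos (3/2)) (1/3) <= 1/2).
  { replace (1/3) with (INR 1 / INR 3) by (simpl; field). apply rpow_rat_le; [lra|lra|lia|]. simpl. lra. }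
  destruct (Req_dec b 0) as [->|Hb0].
  - rewrite pm_0 by lra. lra.
  - rewrite pm_ne by lra. pose proof (M_le_cube b (cos (3/2)) ltac:(lra) ltac:(lra)). lra.
Qed.

Lemma D_small b : 0 < b < pc -> exists x, 0 < x < PI / 2 /\ power_mean b 1 (cos x) (2/3) < sin x / x.
Proof.
  intros Hb. pose proof PI2_3_2. pose proof pc_bounds. pose proof lnpi2_pos. pose proof pc_eq.
  set (g := Rpower (2/PI) b - 2/3).
  assert (Hg : 0 < g).
  { unfold g, Rpower. assert (ln (2/3) < b * ln (2/PI)).
    { rewrite !ln_div by lra. nra. }
    assert (2/3 = exp (ln (2/3))) by (rewrite exp_ln; lra). pose proof (exp_increasing _ _ H3). lra. }
  assert (Hg1 : Rpower (2/PI) b < 1).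
  { apply rpow_lt1; [split; [apply Rdiv_lt_0_compat; lra|] | lra].
    apply (Rmult_lt_reg_r PI); [lra|]. unfold Rdiv; rewrite Rmult_assoc, Rinv_l; lra. }
  set (e := Rmin (g/2) (Rmin (Rpower g (1/b)) (1/2))).
  pose proof (Rmin_l (g/2) (Rmin (Rpower g (1/b)) (1/2))). pose proof (Rmin_r (g/2) (Rmin (Rpower g (1/b)) (1/2))).
  pose proof (Rmin_l (Rpower g (1/b)) (1/2)). pose proof (Rmin_r (Rpower g (1/b)) (1/2)).
  pose proof (rpow_pos g (1/b)).
  assert (He : 0 < e) by (unfold e; apply Rmin_glb_lt; [lra| apply Rmin_glb_lt; lra]).
  fold e in H3, H4.
  exists (PI/2 - e). split; [unfold e in *; lra|].
  assert (Hx : 0 < PI/2 - e < PI/2) by (unfold e in *; lra).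
  rewrite cos_shift, sin_shift.
  assert (He' : 0 < e < PI/2) by lra. destruct (trig_basic e He') as [Hs [Hsx [Hc Hc1]]].
  rewrite pm_ne by lra. unfold PM.
  assert (Hcb : Rpower (sin e) b <= g).
  { apply Rle_trans with (Rpower e b); [apply rpow_mono_base; lra|].
    apply Rle_trans with (Rpower (Rpower g (1/b)) b); [apply rpow_mono_base; lra|].
    rewrite Rpower_mult. replace (1/b * b) with 1 by (field; lra). rewrite Rpower_1; lra. }
  set (s := cos e / (PI/2 - e)).
  assert (Hs0 : 2/PI * cos e <= s).
  { unfold s. assert (Hi : / (PI/2) <= / (PI/2 - e)) by (apply Rinv_le_contravar; lra).
    replace (/ (PI/2)) with (2/PI) in Hi by (field; lra). unfold Rdiv at 2. nra. }
  assert (Hsb : Rpower (2/PI) b * cos e <= Rpower s b).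
  { apply Rle_trans with (Rpower (2/PI * cos e) b).
    - rewrite <- Rpower_mult_distr by (try apply Rdiv_lt_0_compat; lra).
      apply Rmult_le_compat_l; [left; apply rpow_pos|].
      rewrite <- (rpow_1 (cos e)) at 1 by lra. apply rpow_dec; lra.
    - apply rpow_mono_base; [lra|]. split; [apply Rmult_lt_0_compat; [apply Rdiv_lt_0_compat|]; lra| lra]. }
  pose proof (cos_lb2 e ltac:(lra)).
  assert (Hce : 1 - e <= cos e) by nra.
  assert (Hlt : (2 + Rpower (sin e) b) / 3 < Rpower s b).
  { pose proof (rpow_pos (2/PI) b). unfold g in *. nra. }
  assert (Hs1 : 0 < s) by (unfold s; apply Rdiv_lt_0_compat; lra).
  assert (Es : Rpower (Rpower s b) (1/b) = s) by (rewrite Rpower_mult; replace (b * (1/b)) with 1 by (field; lra); apply Rpower_1; lra).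
  rewrite <- Es.
  apply Rlt_Rpower_l; [apply Rdiv_lt_0_compat; lra|]. split; [pose proof (rpow_pos (sin e) b); lra| lra].
Qed.

Theorem corollary4p2 (alpha beta : R) :
  (forall x : R, 0 < x < PI / 2 ->
     power_mean alpha 1 (cos x) (2/3) < sin x / x /\
     sin x / x < power_mean beta 1 (cos x) (2/3))
  <->
  (alpha <= 4/5 /\ beta >= (ln 3 - ln 2) / (ln PI - ln 2)).
Proof.
  pose proof pc_bounds as Hpc. fold pc. split.
  - intros H. split.
    + destruct (Rle_dec alpha (4/5)) as [|Ha]; auto. exfalso.
      destruct (PhiC alpha ltac:(lra)) as [x [Hx HP]].
      pose proof (s_lt_M alpha x ltac:(lra) Hx HP).
      destruct (H x Hx) as [H1 _]. rewrite pm_ne in H1 by (try lra; destruct (trig_basic x Hx) as [? [? [? ?]]]; lra). lra.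
    + destruct (Rle_dec pc beta) as [|Hb]; [lra|]. exfalso.
      destruct (Rle_dec beta 0) as [Hb0|Hb0].
      * destruct (D_neg beta Hb0) as [x [Hx H1]]. destruct (H x Hx) as [_ H2]. lra.
      * destruct (D_small beta ltac:(lra)) as [x [Hx H1]]. destruct (H x Hx) as [_ H2]. lra.
  - intros [Ha Hb] x Hx. destruct (trig_basic x Hx) as [Hs [Hsx [Hc Hc1]]]. split.
    + assert (H45 : PM (4/5) (cos x) < sin x / x) by (apply M_lt_s; [lra| auto| apply PhiA; lra]).
      destruct (Rtotal_order alpha 0) as [Hn|[H0|Hp]].
      * rewrite pm_ne by lra. pose proof (M_le_cube alpha (cos x) Hn ltac:(lra)).
        pose proof (cube_le_M45 (cos x) ltac:(lra)). lra.
      * subst. rewrite pm_0 by lra. pose proof (cube_le_M45 (cos x) ltac:(lra)). lra.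
      * rewrite pm_ne by lra. apply M_lt_s; [lra| auto| apply PhiA; lra].
    + rewrite pm_ne by lra. pose proof (s_lt_M pc x ltac:(lra) Hx (PhiP_neg x Hx)).
      pose proof (J_lemma pc beta (cos x) ltac:(lra) ltac:(lra)). lra.
Qed.
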